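(* Let $r\ge0$ be an integer, let $a,b,c,z,A_1,\dots,A_{r+1},B_1,\dots,B_r$ and $q$ be complex numbers with $|q|<1$ and $|cz|<1$ (generic, so that all denominators are nonzero and all series converge). Then $$\frac{(azq;q)_\infty}{(bz;q)_\infty}\,{}_{r+1}\phi_r\Big[\genfrac{}{}{0pt}{}{A_1,\ldots,A_{r+1}}{B_1,\ldots,B_{r}};q,cz\Big] =\lim_{x,y\to\infty}\sum_{n=0}^{\infty}\frac{(az,(az)^{1/2}q,-(az)^{1/2}q,aq/b,x,y;q)_n}{(q,(az)^{1/2},-(az)^{1/2},bz,azq/x,azq/y;q)_n}\Big(\frac{bz}{xy}\Big)^n \,{}_{r+3}\phi_{r+2}\Big[\genfrac{}{}{0pt}{}{azq^n,azq^{2n+1},A_1,\ldots,A_{r+1}}{bzq^n,azq^{2n},B_1,\ldots,B_{r}};q,czq^n\Big].$$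
   Context: $(x;q)_\infty=\prod_{j\ge0}(1-xq^j)$, $(x;q)_n=\prod_{j=0}^{n-1}(1-xq^j)$, and $(x_1,\dots,x_m;q)_n=\prod_{i=1}^m(x_i;q)_n$. The basic hypergeometric series is ${}_{s+1}\phi_s\big[\genfrac{}{}{0pt}{}{a_1,\ldots,a_{s+1}}{b_1,\ldots,b_{s}};q,w\big]=\sum_{n\ge0}\frac{(a_1,\ldots,a_{s+1};q)_n}{(q,b_1,\ldots,b_s;q)_n}w^n$. *)

(* Defs.v *)
From Stdlib Require Import Reals List.
From Coquelicot Require Import Coquelicot.
Open Scope C_scope.

(* limit of a C-valued sequence (total; meaningful when it converges) *)
Definition Climseq (u : nat -> C) : C := @lim C_CompleteNormedModule (filtermap u eventually).

Definition CSeries (a : nat -> C) : C := Climseq (fun N => sum_n a N).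

Fixpoint qpoch (x q : C) (n : nat) : C :=
  match n with
  | O => RtoC 1
  | S m => qpoch x q m * (RtoC 1 - x * pow_n q m)
  end.

Definition qpinf (x q : C) : C := Climseq (qpoch x q).

Definition qpochs (xs : list C) (q : C) (n : nat) : C :=
  fold_right (fun x acc => qpoch x q n * acc) (RtoC 1) xs.

Definition phi (as_ bs : list C) (q w : C) : C :=
  CSeries (fun n => qpochs as_ q n / (qpoch q q n * qpochs bs q n) * pow_n w n).

Definition fam (f : nat -> C) (m : nat) : list C := map f (seq 0 m).

(* the filter "x -> oo and y -> oo" on C * C (|x|, |y| -> +oo jointly) *)
Definition infty2 (P : C * C -> Prop) : Prop :=
  exists M : R, forall x y : C, M < Cmod x -> M < Cmod y -> P (x, y).

(* Main.v *)
Require Import Defs.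
From Stdlib Require Import Reals List Lia Lra.
From Stdlib Require Import FunctionalExtensionality.
From Coquelicot Require Import Coquelicot.
Open Scope C_scope.

Lemma pow_nC (x : C) n : pow_n x n = x ^ n.
Proof. induction n; simpl; auto; rewrite IHn; reflexivity. Qed.

Lemma Cloc_intro {T} (F : (T -> Prop) -> Prop) {FF : Filter F} (f : T -> C) (l : C) :
  (forall eps : R, (0 < eps)%R -> F (fun x => (Cmod (f x - l) < eps)%R)) ->
  filterlim f F (locally l).
Proof.
  intros H P [eps Heps]. unfold filtermap.
  apply (filter_imp (F := F) (fun x => (Cmod (f x - l) < eps)%R)).
  - intros x Hx. apply Heps. apply C_NormedModule_mixin_compat1. exact Hx.
  - apply H, cond_pos.
Qed.

Lemma Cloc_elim {T} (F : (T -> Prop) -> Prop) {FF : Filter F} (f : T -> C) (l : C) :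
  filterlim f F (locally l) ->
  forall eps : R, (0 < eps)%R -> F (fun x => (Cmod (f x - l) < eps)%R).
Proof.
  intros H eps He.
  assert (Hs : (0 < sqrt 2)%R) by (apply sqrt_lt_R0; lra).
  assert (He' : (0 < eps / sqrt 2)%R) by (apply Rdiv_lt_0_compat; auto).
  apply (H (fun y => (Cmod (y - l) < eps)%R)).
  exists (mkposreal _ He'). intros y Hy.
  apply C_NormedModule_mixin_compat2 in Hy. simpl in Hy.
  replace eps with (sqrt 2 * (eps / sqrt 2))%R by (field; lra). exact Hy.
Qed.

Lemma Climseq_eq (u : nat -> C) (l : C) :
  filterlim u eventually (locally l) -> Climseq u = l.
Proof.
  intros H. unfold Climseq.
  apply (filterlim_locally_unique (F := eventually) u); auto.
  intros P [eps Heps].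
  assert (Hc := complete_cauchy (T := C_CompleteNormedModule) (filtermap u eventually) _).
  refine (filter_imp _ _ _ (Hc _ eps)).
  - intros x Hx. apply Heps. exact Hx.
  - intros e. exists l. apply H. apply locally_ball.
Qed.


Lemma closedC {T} (F : (T -> Prop) -> Prop) {FF : ProperFilter F} (f : T -> C) (l c : C) (e : R) :
  filterlim f F (locally l) -> F (fun x => (Cmod (f x - c) <= e)%R) -> (Cmod (l - c) <= e)%R.
Proof.
  intros H1 H2. destruct (Rle_or_lt (Cmod (l - c)) e) as [h|h]; auto.
  exfalso.
  assert (He : (0 < Cmod (l - c) - e)%R) by lra.
  destruct (filter_ex _ (filter_and _ _ (Cloc_elim F f l H1 _ He) H2)) as [x [Hx1 Hx2]].
  assert (Cmod (l - c) <= Cmod (f x - l) + Cmod (f x - c))%R.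
  { replace (l - c) with (- (f x - l) + (f x - c)) by ring.
    eapply Rle_trans. apply Cmod_triangle. rewrite Cmod_opp. lra. }
  lra.
Qed.

Lemma Rloc_elim {T} (F : (T -> Prop) -> Prop) {FF : Filter F} (f : T -> R) (l : R) :
  filterlim f F (locally l) ->
  forall eps : R, (0 < eps)%R -> F (fun x => (Rabs (f x - l) < eps)%R).
Proof.
  intros H eps He. apply (H (fun y => (Rabs (y - l) < eps)%R)).
  exists (mkposreal _ He). intros y Hy. exact Hy.
Qed.

Lemma closedR_ge {T} (F : (T -> Prop) -> Prop) {FF : ProperFilter F} (f : T -> R) (l c : R) :
  filterlim f F (locally l) -> F (fun x => (c <= f x)%R) -> (c <= l)%R.
Proof.
  intros H1 H2. destruct (Rle_or_lt c l) as [h|h]; auto.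
  exfalso.
  assert (He : (0 < c - l)%R) by lra.
  destruct (filter_ex _ (filter_and _ _ (Rloc_elim F f l H1 _ He) H2)) as [x [Hx1 Hx2]].
  apply Rabs_lt_between in Hx1. lra.
Qed.

Lemma CSeries_eq (a : nat -> C) (l : C) : is_series a l -> CSeries a = l.
Proof. intros H. unfold CSeries. apply Climseq_eq. exact H. Qed.

Lemma sum_n_m_nonneg (M : nat -> R) n m : (forall k, 0 <= M k)%R -> (0 <= sum_n_m M n m)%R.
Proof.
  intros H. apply Rle_trans with (sum_n_m (fun _ => 0%R) n m).
  rewrite sum_n_m_const; lra.
  apply sum_n_m_le. intros; apply H.
Qed.

Lemma sum_n_mono (M : nat -> R) N m : (forall k, 0 <= M k)%R -> (N <= m)%nat -> (sum_n M N <= sum_n M m)%R.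
Proof.
  intros H Hle. destruct (Nat.eq_dec N m) as [->|Hne]; [lra|].
  assert (Hs : sum_n_m M (S N) m = (sum_n M m - sum_n M N)%R).
  { etransitivity; [apply (sum_n_m_sum_n M N m Hle)|reflexivity]. }
  assert (0 <= sum_n_m M (S N) m)%R by (apply sum_n_m_nonneg; auto).
  lra.
Qed.

Lemma sum_n_le_lim (M : nat -> R) SM N : (forall k, 0 <= M k)%R -> is_series M SM -> (sum_n M N <= SM)%R.
Proof.
  intros H HS. apply (closedR_ge eventually (sum_n M)); auto.
  exists N. intros m Hm. apply sum_n_mono; auto.
Qed.

Lemma series_le (a : nat -> C) (M : nat -> R) (SM : R) :
  (forall n, Cmod (a n) <= M n)%R -> is_series M SM ->
  ex_series a /\ (forall N, Cmod (CSeries a - sum_n a N) <= SM - sum_n M N)%R.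
Proof.
  intros Hb HS.
  assert (HM0 : forall k, (0 <= M k)%R) by (intros k; eapply Rle_trans; [apply Cmod_ge_0|apply Hb]).
  assert (Hex : ex_series a).
  { apply (ex_series_le (V := C_CompleteNormedModule) a M).
    - intros n. exact (Hb n).
    - exists SM; auto. }
  split; auto.
  destruct Hex as [la Hla]. rewrite (CSeries_eq _ _ Hla).
  intros N.
  apply (closedC eventually (sum_n a)); auto.
  exists N. intros m Hm.
  destruct (Nat.eq_dec N m) as [->|Hne].
  - replace (sum_n a m - sum_n a m) with (RtoC 0) by ring. rewrite Cmod_0.
    assert (Hl := sum_n_le_lim M SM m HM0 HS). lra.
  - assert (Hs := sum_n_m_sum_n a N m Hm).
    assert (Hs2 : sum_n_m M (S N) m = (sum_n M m - sum_n M N)%R).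
    { etransitivity; [apply (sum_n_m_sum_n M N m Hm)|reflexivity]. }
    change (minus (sum_n a m) (sum_n a N)) with (sum_n a m - sum_n a N) in Hs.
    rewrite <- Hs.
    apply Rle_trans with (sum_n_m (fun k => Cmod (a k)) (S N) m).
    exact (norm_sum_n_m (V := C_NormedModule) a (S N) m).
    eapply Rle_trans. apply sum_n_m_le. intros k. apply Hb.
    eapply Rle_trans; [right; exact Hs2|].
    assert (Hl := sum_n_le_lim M SM m HM0 HS). lra.
Qed.

Lemma series_le_norm (a : nat -> C) (M : nat -> R) (SM : R) :
  (forall n, Cmod (a n) <= M n)%R -> is_series M SM ->
  ex_series a /\ (Cmod (CSeries a) <= SM)%R.
Proof.
  intros Hb HS. destruct (series_le a M SM Hb HS) as [Hex H].
  split; auto. specialize (H 0%nat). rewrite !sum_O in H.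
  replace (CSeries a) with ((CSeries a - a 0%nat) + a 0%nat) by ring.
  eapply Rle_trans. apply Cmod_triangle. specialize (Hb 0%nat). lra.
Qed.


Lemma finsum_lim {T} (F : (T -> Prop) -> Prop) {FF : Filter F} (f : T -> nat -> C) (g : nat -> C) :
  (forall n, filterlim (fun p => f p n) F (locally (g n))) ->
  forall N, filterlim (fun p => sum_n (f p) N) F (locally (sum_n g N)).
Proof.
  intros H N. induction N.
  - rewrite sum_O. apply filterlim_ext with (f := fun p => f p 0%nat).
    + intros p; rewrite sum_O; auto.
    + apply H.
  - rewrite sum_Sn.
    apply filterlim_ext with (f := fun p => plus (sum_n (f p) N) (f p (S N))).
    + intros p; rewrite sum_Sn; auto.
    + eapply filterlim_comp_2; [exact IHN | apply H | apply (filterlim_plus (V := C_NormedModule))].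
Qed.

Lemma tannery {T} (F : (T -> Prop) -> Prop) {FF : ProperFilter F}
  (f : T -> nat -> C) (g : nat -> C) (M : nat -> R) (SM : R) :
  is_series M SM ->
  F (fun p => forall n, (Cmod (f p n) <= M n)%R) ->
  (forall n, filterlim (fun p => f p n) F (locally (g n))) ->
  F (fun p => ex_series (f p)) /\ ex_series g /\
  filterlim (fun p => CSeries (f p)) F (locally (CSeries g)).
Proof.
  intros HS HB HL.
  assert (Hg : forall n, (Cmod (g n) <= M n)%R).
  { intros n. replace (g n) with (g n - 0) by ring.
    apply (closedC F (fun p => f p n)); auto.
    eapply filter_imp; [|exact HB]; intros p Hp.
    replace (f p n - 0) with (f p n) by ring. apply Hp. }
  split; [|split].
  - apply (filter_imp _ _ (fun p H => proj1 (series_le (f p) M SM H HS)) HB).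
  - apply (proj1 (series_le g M SM Hg HS)).
  - apply (Cloc_intro F (fun p => CSeries (f p))). intros eps He.
    assert (He3 : (0 < eps / 3)%R) by lra.
    destruct (Rloc_elim eventually (sum_n M) SM HS _ He3) as [N HN].
    specialize (HN N (le_n N)).
    apply Rabs_lt_between in HN.
    assert (HgN := proj2 (series_le g M SM Hg HS) N).
    apply (filter_imp (fun p => (forall n, Cmod (f p n) <= M n)%R /\
                                (Cmod (sum_n (f p) N - sum_n g N) < eps / 3)%R)).
    + intros p [Hp1 Hp2].
      assert (HfN := proj2 (series_le (f p) M SM Hp1 HS) N).
      replace (CSeries (f p) - CSeries g) with
        ((CSeries (f p) - sum_n (f p) N) + (sum_n (f p) N - sum_n g N) - (CSeries g - sum_n g N)) by ring.
      eapply Rle_lt_trans. apply Cmod_triangle.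
      rewrite Cmod_opp.
      eapply Rle_lt_trans. apply Rplus_le_compat_r. apply Cmod_triangle.
      lra.
    + apply filter_and; auto.
      apply (Cloc_elim F (fun p => sum_n (f p) N)); auto.
      apply finsum_lim; auto.
destruct FF; auto. Qed.


Lemma qpoch_0 x q : qpoch x q 0 = 1.
Proof. reflexivity. Qed.

Lemma qpoch_S x q n : qpoch x q (S n) = qpoch x q n * (1 - x * q ^ n).
Proof. simpl. rewrite pow_nC. reflexivity. Qed.

Lemma qpoch_add x q n k : qpoch x q (n + k) = qpoch x q n * qpoch (x * q ^ n) q k.
Proof.
  induction k.
  - rewrite Nat.add_0_r, qpoch_0. ring.
  - rewrite Nat.add_succ_r, !qpoch_S, IHk, Cpow_add_r. ring.
Qed.

Lemma Cmult_neq0 (x y : C) : x <> 0 -> y <> 0 -> x * y <> 0.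
Proof.
  intros Hx Hy H. apply Cmod_gt_0 in Hx. apply Cmod_gt_0 in Hy.
  assert (Cmod (x * y) = 0%R) by (rewrite H; apply Cmod_0).
  rewrite Cmod_mult in H0. nra.
Qed.

Lemma Cminus_neq0 (x : C) : x <> 1 -> 1 - x <> 0.
Proof. intros H H'. apply H. replace x with (1 - (1 - x)) by ring. rewrite H'. ring. Qed.

Lemma qpoch_nz x q n : (forall j, (j < n)%nat -> x * q ^ j <> 1) -> qpoch x q n <> 0.
Proof.
  induction n; intros H.
  - rewrite qpoch_0. intros H'. injection H' as H'. lra.
  - rewrite qpoch_S. apply Cmult_neq0.
    + apply IHn. intros j Hj. apply H. lia.
    + apply Cminus_neq0. apply H. lia.
Qed.

Lemma qpoch_shift1 x q k : qpoch (x * q) q k * (1 - x) = qpoch x q k * (1 - x * q ^ k).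
Proof.
  induction k.
  - rewrite !qpoch_0. simpl. ring.
  - rewrite !qpoch_S.
    replace (qpoch (x * q) q k * (1 - x * q * q ^ k) * (1 - x))
      with (qpoch (x * q) q k * (1 - x) * (1 - x * q * q ^ k)) by ring.
    rewrite IHk. rewrite Cpow_S. ring.
Qed.

Lemma qpoch_w (w A q : C) n : w * w = A ->
  qpoch (w * q) q n * qpoch (- w * q) q n * (1 - A) =
  qpoch w q n * qpoch (- w) q n * (1 - A * (q ^ n * q ^ n)).
Proof.
  intros HA. induction n.
  - rewrite !qpoch_0. simpl. ring.
  - rewrite !qpoch_S.
    replace (qpoch (w * q) q n * (1 - w * q * q ^ n) *
      (qpoch (- w * q) q n * (1 - - w * q * q ^ n)) * (1 - A))
    with (qpoch (w * q) q n * qpoch (- w * q) q n * (1 - A) * ((1 - w * q * q ^ n) * (1 - - w * q * q ^ n))) by ring.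
    rewrite IHn. rewrite <- HA. simpl. ring.
Qed.

Lemma Cmod_1m_le (y : C) : (Cmod (1 - y) <= 1 + Cmod y)%R.
Proof. eapply Rle_trans. apply Cmod_triangle. rewrite Cmod_opp, Cmod_1. lra. Qed.

Lemma Cmod_1m_ge (y : C) : (1 - Cmod y <= Cmod (1 - y))%R.
Proof.
  assert (H := Cmod_triangle (1 - y) y). replace (1 - y + y) with (RtoC 1) in H by ring.
  rewrite Cmod_1 in H. lra.
Qed.

Lemma Cmod_xqn x q n : Cmod (x * q ^ n) = (Cmod x * Cmod q ^ n)%R.
Proof. rewrite Cmod_mult, Cmod_pow. reflexivity. Qed.

Lemma qpoch_upper x q n : (Cmod q < 1)%R ->
  (Cmod (qpoch x q n) <= exp (Cmod x * (1 - Cmod q ^ n) / (1 - Cmod q)))%R.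
Proof.
  intros Hq. assert (Hr := Cmod_ge_0 q). assert (Hx := Cmod_ge_0 x).
  induction n.
  - rewrite qpoch_0, Cmod_1. simpl. replace (Cmod x * (1 - 1) / (1 - Cmod q))%R with 0%R by (field; lra).
    rewrite exp_0. lra.
  - rewrite qpoch_S, Cmod_mult.
    assert (Hp : (0 <= Cmod q ^ n)%R) by (apply pow_le; auto).
    replace (Cmod x * (1 - Cmod q ^ S n) / (1 - Cmod q))%R
      with (Cmod x * (1 - Cmod q ^ n) / (1 - Cmod q) + Cmod x * Cmod q ^ n)%R by (simpl; field; lra).
    rewrite exp_plus.
    apply Rmult_le_compat; try apply Cmod_ge_0; auto.
    eapply Rle_trans. apply Cmod_1m_le. rewrite Cmod_xqn. apply exp_ineq1_le.
Qed.

Lemma exp_le_mono a b : (a <= b)%R -> (exp a <= exp b)%R.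
Proof. intros h. destruct (Rle_lt_or_eq_dec _ _ h) as [h'|h']; [left; apply exp_increasing; auto|rewrite h'; lra]. Qed.

Lemma qpoch_ub x q n : (Cmod q < 1)%R ->
  (Cmod (qpoch x q n) <= exp (Cmod x / (1 - Cmod q)))%R.
Proof.
  intros Hq. eapply Rle_trans. apply qpoch_upper; auto.
  apply exp_le_mono.
  assert (Hr := Cmod_ge_0 q). assert (Hx := Cmod_ge_0 x).
  assert (Hp : (0 <= Cmod q ^ n)%R) by (apply pow_le; auto).
  unfold Rdiv. apply Rmult_le_compat_r. left; apply Rinv_0_lt_compat; lra. nra.
Qed.


Lemma pow_le1 (x : R) n : (0 <= x)%R -> (x <= 1)%R -> (x ^ n <= 1)%R.
Proof. intros h1 h2. induction n; simpl; [lra|]. assert (0 <= x ^ n)%R by (apply pow_le; auto). nra. Qed.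

Lemma pow_decr (x : R) m n : (0 <= x)%R -> (x <= 1)%R -> (m <= n)%nat -> (x ^ n <= x ^ m)%R.
Proof.
  intros h1 h2 h. replace n with (m + (n - m))%nat by lia. rewrite pow_add.
  assert (0 <= x ^ m)%R by (apply pow_le; auto). assert (x ^ (n - m) <= 1)%R by (apply pow_le1; auto).
  assert (0 <= x ^ (n - m))%R by (apply pow_le; auto). nra.
Qed.

Lemma qpoch_lower x q n : (Cmod q < 1)%R ->
  (1 - Cmod x * (1 - Cmod q ^ n) / (1 - Cmod q) <= Cmod (qpoch x q n))%R.
Proof.
  intros Hq. assert (Hr := Cmod_ge_0 q). assert (Hx := Cmod_ge_0 x).
  induction n.
  - rewrite qpoch_0, Cmod_1. simpl. replace (Cmod x * (1 - 1) / (1 - Cmod q))%R with 0%R by (field; lra). lra.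
  - rewrite qpoch_S, Cmod_mult.
    assert (Hp : (0 <= Cmod q ^ n)%R) by (apply pow_le; auto).
    replace (Cmod x * (1 - Cmod q ^ S n) / (1 - Cmod q))%R
      with (Cmod x * (1 - Cmod q ^ n) / (1 - Cmod q) + Cmod x * Cmod q ^ n)%R by (simpl; field; lra).
    set (s := (Cmod x * (1 - Cmod q ^ n) / (1 - Cmod q))%R) in *.
    assert (H1 := Cmod_1m_ge (x * q ^ n)). rewrite Cmod_xqn in H1.
    assert (H0 := Cmod_ge_0 (qpoch x q n)). assert (H2 := Cmod_ge_0 (1 - x * q ^ n)).
    destruct (Rle_or_lt (1 - (s + Cmod x * Cmod q ^ n)) 0) as [h|h].
    + apply Rle_trans with 0%R; [lra| apply Rmult_le_pos; auto].
    + assert (Hc : (0 <= Cmod x * Cmod q ^ n)%R) by nra.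
      assert (Hs : (0 <= s)%R).
      { unfold s. apply Rdiv_le_0_compat; [|lra]. apply Rmult_le_pos; auto.
        assert (Cmod q ^ n <= 1)%R by (apply pow_le1; lra). lra. }
      apply Rle_trans with ((1 - s) * (1 - Cmod x * Cmod q ^ n))%R; [nra|].
      apply Rmult_le_compat; lra.
Qed.

Lemma qpoch_lb x q : (Cmod q < 1)%R -> (forall j, x * q ^ j <> 1) ->
  exists m, (0 < m)%R /\ forall n, (m <= Cmod (qpoch x q n))%R.
Proof.
  intros Hq Hne. assert (Hr := Cmod_ge_0 q). assert (Hx := Cmod_ge_0 x).
  assert (Hy : (0 < (1 - Cmod q) / (2 * (Cmod x + 1)))%R) by (apply Rdiv_lt_0_compat; lra).
  destruct (pow_lt_1_zero (Cmod q) ltac:(rewrite Rabs_pos_eq; lra) _ Hy) as [J HJ].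
  specialize (HJ J (le_n J)). rewrite Rabs_pos_eq in HJ by (apply pow_le; auto).
  set (P := exp (Cmod x / (1 - Cmod q))).
  assert (HP1 : (1 <= P)%R).
  { unfold P. apply Rle_trans with (exp 0); [rewrite exp_0; lra|]. apply exp_le_mono. apply Rdiv_le_0_compat; lra. }
  assert (HJnz : qpoch x q J <> 0) by (apply qpoch_nz; auto).
  apply Cmod_gt_0 in HJnz.
  exists (Cmod (qpoch x q J) / (2 * P))%R. split.
  - apply Rdiv_lt_0_compat; lra.
  - intros n. destruct (Compare_dec.le_lt_dec n J) as [h|h].
    + replace J with (n + (J - n))%nat in HJnz |- * by lia.
      rewrite qpoch_add, Cmod_mult in *.
      assert (Hb := qpoch_ub (x * q ^ n) q (J - n) Hq).
      assert (Hb2 : (exp (Cmod (x * q ^ n) / (1 - Cmod q)) <= P)%R).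
      { unfold P. apply exp_le_mono. unfold Rdiv. apply Rmult_le_compat_r.
        left; apply Rinv_0_lt_compat; lra.
        rewrite Cmod_xqn. assert (Cmod q ^ n <= 1)%R by (apply pow_le1; lra). nra. }
      assert (H0 := Cmod_ge_0 (qpoch x q n)).
      assert (H1 := Cmod_ge_0 (qpoch (x * q ^ n) q (J - n))).
      apply Rle_trans with (Cmod (qpoch x q n) * Cmod (qpoch (x * q ^ n) q (J - n)) / P)%R.
      * unfold Rdiv. apply Rmult_le_compat_l; [nra|].
        apply Rinv_le_contravar; lra.
      * unfold Rdiv. apply Rle_trans with (Cmod (qpoch x q n) * P * / P)%R.
        apply Rmult_le_compat_r. left; apply Rinv_0_lt_compat; lra. nra.
        right. field. lra.
    + replace n with (J + (n - J))%nat by lia.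
      rewrite qpoch_add, Cmod_mult.
      assert (Hl := qpoch_lower (x * q ^ J) q (n - J) Hq).
      rewrite Cmod_xqn in Hl.
      assert (Hp : (0 <= Cmod q ^ (n - J))%R) by (apply pow_le; auto).
      assert (Hp1 : (Cmod q ^ (n - J) <= 1)%R) by (apply pow_le1; lra).
      assert (HJp : (0 <= Cmod q ^ J)%R) by (apply pow_le; auto).
      assert (Hh : (Cmod x * Cmod q ^ J * (1 - Cmod q ^ (n - J)) / (1 - Cmod q) <= 1/2)%R).
      { unfold Rdiv. 
        assert (Cmod x * Cmod q ^ J <= (1 - Cmod q) / 2)%R.
        { apply Rle_trans with (Cmod x * ((1 - Cmod q) / (2 * (Cmod x + 1))))%R.
          apply Rmult_le_compat_l; lra.
          unfold Rdiv. rewrite Rinv_mult.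
          assert (0 < / (Cmod x + 1))%R by (apply Rinv_0_lt_compat; lra).
          assert (Cmod x * / (Cmod x + 1) <= 1)%R.
          { apply Rmult_le_reg_r with (Cmod x + 1)%R; [lra|]. rewrite Rmult_assoc, Rinv_l by lra. lra. }
          assert (0 < 1 - Cmod q)%R by lra.
          replace (Cmod x * ((1 - Cmod q) * (/ 2 * / (Cmod x + 1))))%R with
            ((Cmod x * / (Cmod x + 1)) * ((1 - Cmod q) * / 2))%R by ring.
          replace ((1 - Cmod q) * / 2)%R with (1 * ((1 - Cmod q) * / 2))%R at 2 by ring.
          apply Rmult_le_compat_r; lra. }
        assert (0 < / (1 - Cmod q))%R by (apply Rinv_0_lt_compat; lra).
        apply Rle_trans with ((1 - Cmod q) / 2 * 1 * / (1 - Cmod q))%R.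
        apply Rmult_le_compat_r; [lra|]. apply Rmult_le_compat; nra.
        right. field. lra. }
      assert (H0 := Cmod_ge_0 (qpoch x q J)).
      apply Rle_trans with (Cmod (qpoch x q J) * (1/2))%R.
      * unfold Rdiv. rewrite Rinv_mult. 
        assert (0 < / P <= 1)%R. { split. apply Rinv_0_lt_compat; lra. apply Rle_trans with (/ 1)%R; [apply Rinv_le_contravar; lra| rewrite Rinv_1; lra]. }
        nra.
      * apply Rmult_le_compat_l; lra.
Qed.


Lemma qpochs_cons x l q n : qpochs (x :: l) q n = qpoch x q n * qpochs l q n.
Proof. reflexivity. Qed.
Lemma qpochs_nil q n : qpochs nil q n = 1.
Proof. reflexivity. Qed.

Lemma qpochs_ub l q : (Cmod q < 1)%R -> exists K, (0 <= K)%R /\ forall n, (Cmod (qpochs l q n) <= K)%R.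
Proof.
  intros Hq. induction l as [|x l IH].
  - exists 1%R. split; [lra|]. intros n. rewrite qpochs_nil, Cmod_1. lra.
  - destruct IH as [K [HK0 HK]].
    exists (exp (Cmod x / (1 - Cmod q)) * K)%R. split.
    + apply Rmult_le_pos; auto. left; apply exp_pos.
    + intros n. rewrite qpochs_cons, Cmod_mult.
      apply Rmult_le_compat; try apply Cmod_ge_0; auto. apply qpoch_ub; auto.
Qed.

Lemma qpochs_lb l q : (Cmod q < 1)%R -> (forall x, In x l -> forall j, x * q ^ j <> 1) ->
  exists m, (0 < m)%R /\ forall n, (m <= Cmod (qpochs l q n))%R.
Proof.
  intros Hq. induction l as [|x l IH]; intros Hl.
  - exists 1%R. split; [lra|]. intros n. rewrite qpochs_nil, Cmod_1. lra.
  - destruct IH as [K [HK0 HK]]. { intros y Hy. apply Hl. right; auto. }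
    destruct (qpoch_lb x q Hq) as [m [Hm0 Hm]]. { apply Hl. left; auto. }
    exists (m * K)%R. split. apply Rmult_lt_0_compat; auto.
    intros n. rewrite qpochs_cons, Cmod_mult.
    apply Rmult_le_compat; lra || auto.
Qed.

Lemma Cmod_lt1_neq1 (y : C) : (Cmod y < 1)%R -> y <> 1.
Proof. intros H E. rewrite E, Cmod_1 in H. lra. Qed.

Lemma qq_nz q j : (Cmod q < 1)%R -> q * q ^ j <> 1.
Proof.
  intros Hq. apply Cmod_lt1_neq1. rewrite Cmod_mult, Cmod_pow.
  assert (Hr := Cmod_ge_0 q).
  assert (Cmod q ^ j <= 1)%R by (apply pow_le1; lra).
  assert (0 <= Cmod q ^ j)%R by (apply pow_le; auto). nra.
Qed.

Lemma in_fam (f : nat -> C) m x : In x (fam f m) -> exists j, (j < m)%nat /\ x = f j.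
Proof.
  unfold fam. intros H. apply in_map_iff in H. destruct H as [j [E Hj]].
  apply in_seq in Hj. exists j. split; [lia|auto].
Qed.

Lemma geom_series (c r : R) : (0 <= r < 1)%R -> is_series (fun n => c * r ^ n)%R (c / (1 - r))%R.
Proof.
  intros Hr. assert (H := is_series_geom r ltac:(rewrite Rabs_pos_eq; lra)).
  apply (is_series_scal_l (K := R_AbsRing) (V := R_NormedModule) c) in H.
  unfold Rdiv. exact H.
Qed.

Lemma qpoch_conv x q : (Cmod q < 1)%R -> filterlim (qpoch x q) eventually (locally (qpinf x q)).
Proof.
  intros Hq. assert (Hr := Cmod_ge_0 q).
  set (d := fun j => qpoch x q (S j) - qpoch x q j).
  set (P := exp (Cmod x / (1 - Cmod q))).
  assert (Hd : forall j, (Cmod (d j) <= (P * Cmod x) * Cmod q ^ j)%R).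
  { intros j. unfold d. rewrite qpoch_S.
    replace (qpoch x q j * (1 - x * q ^ j) - qpoch x q j) with (- (qpoch x q j * (x * q ^ j))) by ring.
    rewrite Cmod_opp, Cmod_mult, Cmod_xqn, <- Rmult_assoc. apply Rmult_le_compat_r.
    apply pow_le; auto.
    apply Rmult_le_compat_r. apply Cmod_ge_0. apply qpoch_ub; auto. }
  destruct (series_le d _ _ Hd (geom_series _ _ (conj Hr Hq))) as [[la Hla] _].
  assert (Hs : forall N, sum_n d N = qpoch x q (S N) - 1).
  { induction N. rewrite sum_O. unfold d. rewrite qpoch_0. reflexivity.
    rewrite sum_Sn, IHN. unfold d. change (plus (qpoch x q (S N) - 1) (qpoch x q (S (S N)) - qpoch x q (S N)) = qpoch x q (S (S N)) - 1).
    unfold plus; simpl. ring. }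
  assert (Hlim : filterlim (qpoch x q) eventually (locally (1 + la))).
  { apply (Cloc_intro eventually). intros eps He.
    destruct (Cloc_elim eventually _ _ Hla eps He) as [N HN].
    exists (S N). intros n Hn. destruct n as [|n]; [lia|].
    specialize (HN n ltac:(lia)). rewrite Hs in HN.
    replace (qpoch x q (S n) - (1 + la)) with (qpoch x q (S n) - 1 - la) by ring. exact HN. }
  unfold qpinf. rewrite (Climseq_eq _ _ Hlim). exact Hlim.
Qed.


Lemma lim_mult {T} (F : (T -> Prop) -> Prop) {FF : Filter F} (f g : T -> C) (a b : C) :
  filterlim f F (locally a) -> filterlim g F (locally b) ->
  filterlim (fun p => f p * g p) F (locally (a * b)).
Proof.
  intros Hf Hg. apply Cloc_intro; auto. intros eps He.
  assert (Ha := Cmod_ge_0 a). assert (Hb := Cmod_ge_0 b).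
  set (e := Rmin 1 (eps / (2 * (Cmod a + Cmod b + 1)))).
  assert (He1 : (e <= 1)%R) by apply Rmin_l.
  assert (He2 : (e <= eps / (2 * (Cmod a + Cmod b + 1)))%R) by apply Rmin_r.
  assert (He0 : (0 < e)%R).
  { unfold e. apply Rmin_glb_lt; [lra|]. apply Rdiv_lt_0_compat; lra. }
  apply (filter_imp (fun p => (Cmod (f p - a) < e)%R /\ (Cmod (g p - b) < e)%R)).
  2: { apply filter_and; apply Cloc_elim; auto. }
  intros p [H1 H2].
  replace (f p * g p - a * b) with ((f p - a) * (g p - b) + (f p - a) * b + a * (g p - b)) by ring.
  eapply Rle_lt_trans. apply Cmod_triangle.
  eapply Rle_lt_trans. apply Rplus_le_compat_r. apply Cmod_triangle.
  rewrite !Cmod_mult.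
  assert (H3 := Cmod_ge_0 (f p - a)). assert (H4 := Cmod_ge_0 (g p - b)).
  assert (Hk : (e * (Cmod a + Cmod b + 1) <= eps / 2)%R).
  { apply Rle_trans with (eps / (2 * (Cmod a + Cmod b + 1)) * (Cmod a + Cmod b + 1))%R.
    apply Rmult_le_compat_r; lra. right. field. lra. }
  assert (Cmod (f p - a) * Cmod (g p - b) <= e * 1)%R by (apply Rmult_le_compat; lra).
  assert (Cmod (f p - a) * Cmod b <= e * Cmod b)%R by (apply Rmult_le_compat_r; lra).
  assert (Cmod a * Cmod (g p - b) <= Cmod a * e)%R by (apply Rmult_le_compat_l; lra).
  nra.
Qed.

Lemma lim_plus {T} (F : (T -> Prop) -> Prop) {FF : Filter F} (f g : T -> C) (a b : C) :
  filterlim f F (locally a) -> filterlim g F (locally b) ->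
  filterlim (fun p => f p + g p) F (locally (a + b)).
Proof.
  intros Hf Hg. exact (filterlim_comp_2 f g Cplus Hf Hg (filterlim_plus (V := C_NormedModule) a b)).
Qed.

Lemma lim_const {T} (F : (T -> Prop) -> Prop) {FF : Filter F} (a : C) :
  filterlim (fun _ => a) F (locally a).
Proof. apply filterlim_const. Qed.

Lemma lim_inv {T} (F : (T -> Prop) -> Prop) {FF : Filter F} (g : T -> C) (b : C) :
  b <> 0 -> filterlim g F (locally b) -> filterlim (fun p => / g p) F (locally (/ b)).
Proof.
  intros Hb Hg. apply Cloc_intro; auto. intros eps He.
  assert (Hb' := proj1 (Cmod_gt_0 b) Hb).
  set (e := Rmin (Cmod b / 2) (eps * (Cmod b * Cmod b) / 2)).
  assert (He' : (0 < e)%R).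
  { unfold e. apply Rmin_glb_lt; [lra|]. apply Rdiv_lt_0_compat; [|lra]. apply Rmult_lt_0_compat; nra. }
  apply (filter_imp (fun p => (Cmod (g p - b) < e)%R)); [|apply Cloc_elim; auto].
  intros p Hp.
  assert (He1 : (e <= Cmod b / 2)%R) by apply Rmin_l.
  assert (He2 : (e <= eps * (Cmod b * Cmod b) / 2)%R) by apply Rmin_r.
  assert (Hgp : (Cmod b / 2 < Cmod (g p))%R).
  { assert (H := Cmod_triangle (g p) (- (g p - b))). replace (g p + - (g p - b)) with b in H by ring.
    rewrite Cmod_opp in H. lra. }
  assert (Hg0 : g p <> 0). { intros E. rewrite E, Cmod_0 in Hgp. lra. }
  replace (/ g p - / b) with ((b - g p) * / (g p * b)) by (field; auto).
  rewrite Cmod_mult, Cmod_inv by (apply Cmult_neq0; auto).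
  rewrite Cmod_mult.
  replace (b - g p) with (- (g p - b)) by ring. rewrite Cmod_opp.
  apply Rlt_le_trans with (e * / (Cmod b / 2 * Cmod b))%R.
  - apply Rle_lt_trans with (Cmod (g p - b) * / (Cmod b / 2 * Cmod b))%R.
    + apply Rmult_le_compat_l. apply Cmod_ge_0. apply Rinv_le_contravar. nra.
      apply Rmult_le_compat_r; lra.
    + apply Rmult_lt_compat_r; auto. apply Rinv_0_lt_compat. nra.
  - apply Rle_trans with (eps * (Cmod b * Cmod b) / 2 * / (Cmod b / 2 * Cmod b))%R.
    apply Rmult_le_compat_r; auto. left; apply Rinv_0_lt_compat; nra.
    right. field. lra.
Qed.

Fixpoint gq (u q : C) (n : nat) : C :=
  match n with O => 1 | S m => gq u q m * (u - q ^ m) end.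

Lemma qpoch_inv (x q : C) n : x <> 0 -> qpoch x q n = x ^ n * gq (/ x) q n.
Proof.
  intros Hx. induction n.
  - simpl. ring.
  - rewrite qpoch_S, IHn. simpl. field. auto.
Qed.

Lemma gq_lim {T} (F : (T -> Prop) -> Prop) {FF : Filter F} (h : T -> C) (u0 q : C) n :
  filterlim h F (locally u0) -> filterlim (fun p => gq (h p) q n) F (locally (gq u0 q n)).
Proof.
  intros H. induction n.
  - apply (lim_const F).
  - simpl. apply (lim_mult F); auto. apply (lim_plus F); auto. apply (lim_const F).
Qed.

Lemma qpoch_lim {T} (F : (T -> Prop) -> Prop) {FF : Filter F} (h : T -> C) (x0 q : C) n :
  filterlim h F (locally x0) -> filterlim (fun p => qpoch (h p) q n) F (locally (qpoch x0 q n)).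
Proof.
  intros H. induction n.
  - apply (lim_const F).
  - rewrite qpoch_S.
    apply filterlim_ext with (f := fun p => qpoch (h p) q n * (1 + (-1) * (h p * q ^ n))).
    { intros p; rewrite qpoch_S; ring. }
    replace (qpoch x0 q n * (1 - x0 * q ^ n)) with (qpoch x0 q n * (1 + (-1) * (x0 * q ^ n))) by ring.
    apply (lim_mult F); auto. apply (lim_plus F); [apply (lim_const F)|].
    apply (lim_mult F); [apply (lim_const F)|]. apply (lim_mult F); [auto|apply (lim_const F)].
Qed.

Instance infty2_filter : ProperFilter infty2.
Proof.
  constructor.
  - intros P [M HM]. set (t := (Rabs M + 1)%R). exists (RtoC t, RtoC t). apply HM.
    + rewrite Cmod_R. unfold t. rewrite Rabs_pos_eq; [|assert (0 <= Rabs M)%R by apply Rabs_pos; lra].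
      assert (M <= Rabs M)%R by apply RRle_abs. lra.
    + rewrite Cmod_R. unfold t. rewrite Rabs_pos_eq; [|assert (0 <= Rabs M)%R by apply Rabs_pos; lra].
      assert (M <= Rabs M)%R by apply RRle_abs. lra.
  - constructor.
    + exists 0%R. auto.
    + intros P Q [M1 H1] [M2 H2]. exists (Rmax M1 M2). intros x y Hx Hy.
      split; [apply H1|apply H2]; eapply Rle_lt_trans; eauto; [apply Rmax_l|apply Rmax_l|apply Rmax_r|apply Rmax_r].
    + intros P Q HPQ [M HM]. exists M. intros x y Hx Hy. apply HPQ, HM; auto.
Qed.

Lemma inv_lim_fst : filterlim (fun p : C * C => / fst p) infty2 (locally (RtoC 0)).
Proof.
  apply Cloc_intro. apply infty2_filter. intros eps He. exists (/ eps)%R. intros x y Hx _. simpl.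
  assert (Hx0 : x <> 0). { intros E. rewrite E, Cmod_0 in Hx. assert (0 < / eps)%R by (apply Rinv_0_lt_compat; auto). lra. }
  replace (/ x - 0) with (/ x) by ring. rewrite Cmod_inv by auto.
  assert (0 < / eps)%R by (apply Rinv_0_lt_compat; auto).
  replace eps with (/ / eps)%R by (field; lra). apply Rinv_lt_contravar; nra.
Qed.

Lemma inv_lim_snd : filterlim (fun p : C * C => / snd p) infty2 (locally (RtoC 0)).
Proof.
  apply Cloc_intro. apply infty2_filter. intros eps He. exists (/ eps)%R. intros x y _ Hx. simpl.
  assert (Hx0 : y <> 0). { intros E. rewrite E, Cmod_0 in Hx. assert (0 < / eps)%R by (apply Rinv_0_lt_compat; auto). lra. }
  replace (/ y - 0) with (/ y) by ring. rewrite Cmod_inv by auto.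
  assert (0 < / eps)%R by (apply Rinv_0_lt_compat; auto).
  replace eps with (/ / eps)%R by (field; lra). apply Rinv_lt_contravar; nra.
Qed.


Definition ratio (A q u1 u2 : C) n :=
  gq u1 q n * gq u2 q n / (qpoch (A * q * u1) q n * qpoch (A * q * u2) q n).

Lemma gq_bound (u q : C) n (d rho : R) J :
  (Cmod u <= d)%R -> (d <= 1)%R -> (Cmod q <= 1)%R -> (0 < rho <= 2)%R ->
  (forall j, (J <= j)%nat -> (d + Cmod q ^ j <= rho)%R) ->
  (Cmod (gq u q n) <= (2 / rho) ^ J * rho ^ n)%R.
Proof.
  intros Hu Hd Hq Hr HJ. assert (Hq0 := Cmod_ge_0 q).
  assert (H2 : (1 <= 2 / rho)%R).
  { apply Rmult_le_reg_r with rho; [lra|]. unfold Rdiv. rewrite Rmult_assoc, Rinv_l by lra. lra. }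
  assert (Hind : (Cmod (gq u q n) <= (2 / rho) ^ (Nat.min n J) * rho ^ n)%R).
  { induction n.
    - simpl. rewrite Cmod_1. lra.
    - simpl gq. rewrite Cmod_mult.
      assert (Hf : (Cmod (u - q ^ n) <= d + Cmod q ^ n)%R).
      { eapply Rle_trans. apply Cmod_triangle. rewrite Cmod_opp, Cmod_pow. lra. }
      assert (Hp0 : (0 <= Cmod q ^ n)%R) by (apply pow_le; auto).
      assert (Hp1 : (Cmod q ^ n <= 1)%R) by (apply pow_le1; auto).
      assert (H0 := Cmod_ge_0 (gq u q n)). assert (H1 := Cmod_ge_0 (u - q ^ n)).
      assert (Hpos : (0 <= (2 / rho) ^ Nat.min n J * rho ^ n)%R).
      { apply Rmult_le_pos; apply pow_le; lra. }
      destruct (Compare_dec.le_lt_dec J n) as [h|h].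
      + replace (Nat.min (S n) J) with (Nat.min n J) by lia.
        specialize (HJ n h).
        apply Rle_trans with ((2 / rho) ^ Nat.min n J * rho ^ n * rho)%R.
        apply Rmult_le_compat; auto; lra.
        simpl. right; ring.
      + replace (Nat.min (S n) J) with (S (Nat.min n J)) by lia.
        apply Rle_trans with ((2 / rho) ^ Nat.min n J * rho ^ n * 2)%R.
        apply Rmult_le_compat; auto; lra.
        simpl. right. field. lra. }
  eapply Rle_trans; [exact Hind|]. apply Rmult_le_compat_r. apply pow_le; lra.
  apply Rle_pow; auto. lia.
Qed.

Lemma qpoch_half (A q u : C) n : (Cmod q < 1)%R ->
  (Cmod u <= (1 - Cmod q) / (2 * (Cmod A + 1)))%R ->
  (1/2 <= Cmod (qpoch (A * q * u) q n))%R.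
Proof.
  intros Hq Hu. eapply Rle_trans; [|apply qpoch_lower; auto].
  assert (Hq0 := Cmod_ge_0 q). assert (HA := Cmod_ge_0 A). assert (Hu0 := Cmod_ge_0 u).
  rewrite !Cmod_mult.
  assert (Hp0 : (0 <= Cmod q ^ n)%R) by (apply pow_le; auto).
  assert (Hp1 : (Cmod q ^ n <= 1)%R) by (apply pow_le1; lra).
  assert (Hk : (Cmod A * Cmod u <= (1 - Cmod q) / 2)%R).
  { apply Rle_trans with (Cmod A * ((1 - Cmod q) / (2 * (Cmod A + 1))))%R.
    apply Rmult_le_compat_l; lra.
    apply Rle_trans with ((Cmod A + 1) * ((1 - Cmod q) / (2 * (Cmod A + 1))))%R.
    apply Rmult_le_compat_r. apply Rdiv_le_0_compat; lra. lra.
    right. field. lra. }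
  assert (Hk2 : (Cmod A * Cmod q * Cmod u * (1 - Cmod q ^ n) <= Cmod A * Cmod u)%R).
  { replace (Cmod A * Cmod q * Cmod u * (1 - Cmod q ^ n))%R with ((Cmod A * Cmod u) * (Cmod q * (1 - Cmod q ^ n)))%R by ring.
    assert (0 <= Cmod A * Cmod u)%R by nra.
    assert (Cmod q * (1 - Cmod q ^ n) <= 1)%R by nra. 
    assert (0 <= Cmod q * (1 - Cmod q ^ n))%R by nra. nra. }
  assert (Hk3 : (Cmod A * Cmod q * Cmod u * (1 - Cmod q ^ n) / (1 - Cmod q) <= 1/2)%R).
  { apply Rle_trans with ((1 - Cmod q) / 2 / (1 - Cmod q))%R.
    unfold Rdiv. apply Rmult_le_compat_r. left; apply Rinv_0_lt_compat; lra. lra.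
    right. field. lra. }
  lra.
Qed.

Lemma ratio_bound (A q beta : C) : (Cmod q < 1)%R ->
  exists d C0, (0 < d)%R /\ (0 <= C0)%R /\
    forall u1 u2 n, (Cmod u1 <= d)%R -> (Cmod u2 <= d)%R ->
      (Cmod (ratio A q u1 u2 n) * Cmod beta ^ n <= C0 * (1/4) ^ n)%R.
Proof.
  intros Hq. assert (Hq0 := Cmod_ge_0 q). assert (HA := Cmod_ge_0 A). assert (Hb := Cmod_ge_0 beta).
  set (rho := (1 / (2 * (Cmod beta + 1)))%R).
  assert (Hrho : (0 < rho <= 1/2)%R).
  { unfold rho. split. apply Rdiv_lt_0_compat; lra.
    unfold Rdiv. rewrite Rmult_1_l. rewrite Rinv_mult. 
    assert (0 < / (Cmod beta + 1) <= 1)%R.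
    { split. apply Rinv_0_lt_compat; lra. apply Rle_trans with (/ 1)%R. apply Rinv_le_contravar; lra. rewrite Rinv_1; lra. }
    nra. }
  assert (Hsig : (rho * rho * Cmod beta <= 1/4)%R).
  { assert (rho * Cmod beta <= 1/2)%R.
    { replace (rho * Cmod beta)%R with (Cmod beta / (2 * (Cmod beta + 1)))%R by (unfold rho; field; lra).
      apply Rle_trans with ((Cmod beta + 1) / (2 * (Cmod beta + 1)))%R.
      unfold Rdiv. apply Rmult_le_compat_r; [left; apply Rinv_0_lt_compat; lra|lra]. right; field; lra. }
    nra. }
  destruct (pow_lt_1_zero (Cmod q) ltac:(rewrite Rabs_pos_eq; lra) (rho / 2) ltac:(lra)) as [J HJ].
  set (d := Rmin (rho / 2) ((1 - Cmod q) / (2 * (Cmod A + 1)))).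
  assert (Hd1 : (d <= rho / 2)%R) by apply Rmin_l.
  assert (Hd2 : (d <= (1 - Cmod q) / (2 * (Cmod A + 1)))%R) by apply Rmin_r.
  assert (Hd0 : (0 < d)%R).
  { apply Rmin_glb_lt. lra. apply Rdiv_lt_0_compat; lra. }
  exists d, (4 * ((2 / rho) ^ J) ^ 2)%R. split; [auto|split].
  { apply Rmult_le_pos; [lra|]. apply pow_le. apply pow_le. apply Rdiv_le_0_compat; lra. }
  intros u1 u2 n Hu1 Hu2.
  assert (HJ' : forall j, (J <= j)%nat -> (d + Cmod q ^ j <= rho)%R).
  { intros j Hj. specialize (HJ j Hj). rewrite Rabs_pos_eq in HJ by (apply pow_le; auto). lra. }
  assert (G1 := gq_bound u1 q n d rho J Hu1 ltac:(lra) ltac:(lra) ltac:(lra) HJ').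
  assert (G2 := gq_bound u2 q n d rho J Hu2 ltac:(lra) ltac:(lra) ltac:(lra) HJ').
  assert (Q1 := qpoch_half A q u1 n Hq ltac:(lra)).
  assert (Q2 := qpoch_half A q u2 n Hq ltac:(lra)).
  unfold ratio.
  assert (Hnz : qpoch (A * q * u1) q n * qpoch (A * q * u2) q n <> 0).
  { apply Cmult_neq0; intros E; [rewrite E, Cmod_0 in Q1|rewrite E, Cmod_0 in Q2]; lra. }
  rewrite Cmod_div by auto. rewrite !Cmod_mult.
  set (g1 := Cmod (gq u1 q n)) in *. set (g2 := Cmod (gq u2 q n)) in *.
  set (p1 := Cmod (qpoch (A * q * u1) q n)) in *. set (p2 := Cmod (qpoch (A * q * u2) q n)) in *.
  set (K := ((2 / rho) ^ J)%R) in *.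
  assert (HK : (0 <= K)%R) by (apply pow_le; apply Rdiv_le_0_compat; lra).
  assert (Hrn : (0 <= rho ^ n)%R) by (apply pow_le; lra).
  assert (Hg1 := Cmod_ge_0 (gq u1 q n)). assert (Hg2 := Cmod_ge_0 (gq u2 q n)).
  fold g1 g2 in Hg1, Hg2.
  assert (Hbn : (0 <= Cmod beta ^ n)%R) by (apply pow_le; auto).
  apply Rle_trans with (g1 * g2 * 4 * Cmod beta ^ n)%R.
  { apply Rmult_le_compat_r; auto.
    unfold Rdiv. apply Rmult_le_compat_l; [nra|].
    replace 4%R with (/ (1/4))%R by field. apply Rinv_le_contravar; [lra|].
    apply Rle_trans with (1/2 * (1/2))%R; [lra|]. apply Rmult_le_compat; lra. }
  apply Rle_trans with (K * rho ^ n * (K * rho ^ n) * 4 * Cmod beta ^ n)%R.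
  { apply Rmult_le_compat_r; auto. apply Rmult_le_compat_r; [lra|]. apply Rmult_le_compat; auto. }
  replace (K * rho ^ n * (K * rho ^ n) * 4 * Cmod beta ^ n)%R with (4 * K ^ 2 * (rho * rho * Cmod beta) ^ n)%R
    by (rewrite !Rpow_mult_distr; ring).
  apply Rmult_le_compat_l. apply Rmult_le_pos; [lra|apply pow_le; auto].
  apply pow_incr. split; [|auto]. apply Rmult_le_pos; [nra|auto].
Qed.


Lemma qpoch_zero (q : C) n : qpoch 0 q n = 1.
Proof. induction n; auto. rewrite qpoch_S, IHn. ring. Qed.

Section Alg.
Variables a b z q w : C.
Hypothesis Hq : (Cmod q < 1)%R.
Hypothesis Hb : b <> 0.
Hypothesis Hw : w * w = a * z.
Hypothesis HA : forall k, a * z * q ^ k <> 1.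
Hypothesis HBz : forall k, b * z * q ^ k <> 1.

Definition Ofn n := qpoch (a*z) q n * qpoch (w*q) q n * qpoch (-w*q) q n * qpoch (a*q/b) q n /
  (qpoch q q n * qpoch w q n * qpoch (-w) q n * qpoch (b*z) q n) * (b*z)^n.
Definition Yfn n k := qpoch (a*z*q^n) q k * (1 - a*z*(q^n*q^n*q^k)) /
  ((1 - a*z*(q^n*q^n)) * qpoch (b*z*q^n) q k) * (q^n)^k.
Definition efn n := ratio (a*z) q 0 0 n.
Definition Zfn n k := efn n * qpoch (a*z) q (n+k) / qpoch (b*z) q (n+k) * (1 - a*z*(q^n*q^n*q^k)) / (1 - a*z)
  * qpoch (a*q/b) q n / qpoch q q n * (b*z)^n * (q^n)^k.
Definition Wfn n k := - (efn n * qpoch (a*z) q (n+k) / qpoch (b*z) q (n+k) / (1 - a*z)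
  * qpoch (a*q/b) q n * (1 - q^n) / qpoch q q n * (b*z)^n * (q^n)^k).

Lemma nz1 (x : C) : x <> 1 -> 1 - x <> 0.
Proof. apply Cminus_neq0. Qed.

Lemma nzAz : 1 - a * z <> 0.
Proof. apply nz1. intros E. apply (HA 0). simpl. rewrite Cmult_1_r. auto. Qed.

Lemma nzAz2 n : 1 - a * z * (q ^ n * q ^ n) <> 0.
Proof. apply nz1. rewrite <- Cpow_add_r. apply HA. Qed.

Lemma nzBz2 n k : 1 - b * z * (q ^ n * q ^ k) <> 0.
Proof. apply nz1. rewrite <- Cpow_add_r. apply HBz. Qed.

Lemma nzQA n : qpoch (a*z) q n <> 0.
Proof. apply qpoch_nz. intros; apply HA. Qed.
Lemma nzQB n : qpoch (b*z) q n <> 0.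
Proof. apply qpoch_nz. intros; apply HBz. Qed.
Lemma nzQq n : qpoch q q n <> 0.
Proof. apply qpoch_nz. intros; apply qq_nz; auto. Qed.
Lemma nzQBn n k : qpoch (b*z*q^n) q k <> 0.
Proof. apply qpoch_nz. intros j _. rewrite <- Cmult_assoc, <- Cpow_add_r. apply HBz. Qed.
Lemma nzQAn n k : qpoch (a*z*q^n) q k <> 0.
Proof. apply qpoch_nz. intros j _. rewrite <- Cmult_assoc, <- Cpow_add_r. apply HA. Qed.

Lemma w_aux (s : C) j : s * s = a * z -> s * q ^ j <> 1.
Proof.
  intros Hs E. apply (HA (j + j)). rewrite Cpow_add_r, <- Hs.
  replace (s * s * (q ^ j * q ^ j)) with ((s * q ^ j) * (s * q ^ j)) by ring. rewrite E. ring.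
Qed.

Lemma nzQw n : qpoch w q n <> 0.
Proof. apply qpoch_nz. intros j _. apply w_aux. auto. Qed.
Lemma nzQmw n : qpoch (-w) q n <> 0.
Proof. apply qpoch_nz. intros j _. apply w_aux. rewrite <- Hw. ring. Qed.
Lemma nzQmwq n : qpoch (-w*q) q n <> 0.
Proof.
  apply qpoch_nz. intros j _. replace (- w * q * q ^ j) with (- w * q ^ (S j)) by (simpl; ring).
  apply w_aux. rewrite <- Hw. ring.
Qed.

Lemma Ofn_closed n : Ofn n = qpoch (a*z) q n * (1 - a*z*(q^n*q^n)) * qpoch (a*q/b) q n /
  ((1 - a*z) * qpoch q q n * qpoch (b*z) q n) * (b*z)^n.
Proof.
  assert (H := qpoch_w w (a*z) q n Hw).
  unfold Ofn.
  replace (qpoch (w * q) q n) with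
    (qpoch w q n * qpoch (- w) q n * (1 - a * z * (q ^ n * q ^ n)) / ((1 - a*z) * qpoch (- w * q) q n)).
  2: { rewrite <- H. field. split; [apply nzQmwq|apply nzAz]. }
  field; repeat split; auto using nzQmwq, nzAz, nzQq, nzQw, nzQmw, nzQB.
Qed.

Lemma VZ n k : efn n * Ofn n * Yfn n k = Zfn n k.
Proof.
  rewrite Ofn_closed. unfold Yfn, Zfn. rewrite !qpoch_add.
  field; repeat split; auto using nzAz, nzQq, nzQB, nzQBn, nzAz2.
Qed.

Lemma efn_0 : efn 0 = 1.
Proof. unfold efn, ratio. simpl. field; intros E; injection E as E; lra. Qed.

Lemma efn_S n : efn (S n) = efn n * (q ^ n * q ^ n).
Proof.
  unfold efn, ratio. rewrite !Cmult_0_r, !qpoch_zero. simpl. field; intros E; injection E as E; lra.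
Qed.

Lemma tele n k : Zfn n k - Zfn n (S k) = Wfn (S n) k - Wfn n k.
Proof.
  unfold Zfn, Wfn. rewrite efn_S.
  rewrite Nat.add_succ_r, Nat.add_succ_l, !qpoch_S.
  rewrite !Cpow_add_r.
  rewrite !Cpow_S. rewrite (Cpow_mult_l q (q ^ n) k).
  field; repeat split; auto using nzAz, nzQq, nzQB, nzBz2.
  apply nz1, qq_nz; auto.
Qed.

End Alg.


Lemma closedC_ge {T} (F : (T -> Prop) -> Prop) {FF : ProperFilter F} (f : T -> C) (l : C) (m : R) :
  filterlim f F (locally l) -> F (fun x => (m <= Cmod (f x))%R) -> (m <= Cmod l)%R.
Proof.
  intros H1 H2. destruct (Rle_or_lt m (Cmod l)) as [h|h]; auto.
  exfalso.
  assert (He : (0 < m - Cmod l)%R) by lra.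
  destruct (filter_ex _ (filter_and _ _ (Cloc_elim F f l H1 _ He) H2)) as [x [Hx1 Hx2]].
  assert (H := Cmod_triangle (f x - l) l). replace (f x - l + l) with (f x) in H by ring. lra.
Qed.

Lemma Cmod_div_le (x y : C) (X m : R) : (Cmod x <= X)%R -> (0 < m)%R -> (m <= Cmod y)%R ->
  (Cmod (x / y) <= X / m)%R.
Proof.
  intros H1 H2 H3. assert (Hy : y <> 0). { intros E; rewrite E, Cmod_0 in H3; lra. }
  rewrite Cmod_div by auto. unfold Rdiv. apply Rmult_le_compat; auto using Cmod_ge_0.
  left; apply Rinv_0_lt_compat; lra. apply Rinv_le_contravar; lra.
Qed.

Lemma Cmod_mult_le (x y : C) (X Y : R) : (Cmod x <= X)%R -> (Cmod y <= Y)%R -> (Cmod (x * y) <= X * Y)%R.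
Proof. intros H1 H2. rewrite Cmod_mult. apply Rmult_le_compat; auto using Cmod_ge_0. Qed.

Section Inf.
Variables a b z q w : C.
Hypothesis Hq : (Cmod q < 1)%R.
Hypothesis Hb : b <> 0.
Hypothesis Hw : w * w = a * z.
Hypothesis HA : forall k, a * z * q ^ k <> 1.
Hypothesis HBz : forall k, b * z * q ^ k <> 1.

Definition Cfn n k := efn a z q n * qpoch (a*z) q (n+k) / qpoch (b*z) q (n+k) / (1 - a*z)
  * qpoch (a*q/b) q n / qpoch q q n * (b*z)^n * (q^n)^k.

Lemma Z_C n k : Zfn a b z q n k = Cfn n k * (1 - a*z*(q^n*q^n*q^k)).
Proof. unfold Zfn, Cfn. field; repeat split; first [apply (nzQq q Hq) | apply (nzQB b z q HBz) | apply (nzAz a z q HA)]. Qed.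

Lemma W_C n k : Wfn a b z q n k = - (Cfn n k * (1 - q^n)).
Proof. unfold Wfn, Cfn. field; repeat split; first [apply (nzQq q Hq) | apply (nzQB b z q HBz) | apply (nzAz a z q HA)]. Qed.

Lemma Cfn_bound : exists K, (0 <= K)%R /\ forall n k, (Cmod (Cfn n k) <= K * (1/4)^n * (Cmod q ^ n) ^ k)%R.
Proof.
  destruct (ratio_bound (a*z) q (b*z) Hq) as [d [C0 [Hd [HC0 Hr]]]].
  destruct (qpoch_lb (b*z) q Hq HBz) as [mB [HmB HmBb]].
  destruct (qpoch_lb q q Hq (fun j => qq_nz q j Hq)) as [mq [Hmq Hmqb]].
  set (PA := exp (Cmod (a*z) / (1 - Cmod q))).
  set (Pt := exp (Cmod (a*q/b) / (1 - Cmod q))).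
  assert (HPA : (0 <= PA)%R) by (left; apply exp_pos).
  assert (HPt : (0 <= Pt)%R) by (left; apply exp_pos).
  assert (H1A := proj1 (Cmod_gt_0 _) (nzAz a z q HA)).
  exists (C0 * PA / mB / Cmod (1 - a*z) * Pt / mq)%R. split.
  { unfold Rdiv; repeat apply Rmult_le_pos; try lra; left; apply Rinv_0_lt_compat; lra. }
  intros n k.
  assert (He := Hr 0 0 n ltac:(rewrite Cmod_0; lra) ltac:(rewrite Cmod_0; lra)).
  unfold Cfn, efn. rewrite Cmod_mult, Cmod_pow, Cmod_pow.
  rewrite Cmod_mult, Cmod_pow.
  set (E := Cmod (ratio (a*z) q 0 0 n)) in *.
  set (X := qpoch (a * z) q (n + k) / qpoch (b * z) q (n + k) / (1 - a * z) * qpoch (a * q / b) q n / qpoch q q n).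
  assert (HX : (Cmod X <= PA / mB / Cmod (1 - a*z) * Pt / mq)%R).
  { unfold X. apply Cmod_div_le; [|exact Hmq|apply Hmqb].
    apply Cmod_mult_le; [|apply (qpoch_ub _ q n Hq)].
    unfold Cdiv at 1. rewrite Cmod_mult, Cmod_inv by (apply (nzAz a z q HA)).
    apply Rmult_le_compat_r. left; apply Rinv_0_lt_compat; auto.
    apply Cmod_div_le; [apply (qpoch_ub _ q _ Hq)|exact HmB|apply HmBb]. }
  replace (ratio (a * z) q 0 0 n * qpoch (a * z) q (n + k) / qpoch (b * z) q (n + k) / (1 - a * z) *
     qpoch (a * q / b) q n / qpoch q q n) with (ratio (a * z) q 0 0 n * X) by (unfold X, Cdiv; ring).
  rewrite Cmod_mult. fold E.
  assert (HE := Cmod_ge_0 (ratio (a * z) q 0 0 n)). fold E in HE.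
  assert (HX0 := Cmod_ge_0 X).
  assert (Hp1 : (0 <= (Cmod q ^ n) ^ k)%R) by (apply pow_le; apply pow_le; apply Cmod_ge_0).
  assert (Hp2 : (0 <= Cmod (b * z) ^ n)%R) by (apply pow_le; apply Cmod_ge_0).
  replace (E * Cmod X * Cmod (b * z) ^ n * (Cmod q ^ n) ^ k)%R with ((E * Cmod (b * z) ^ n) * Cmod X * (Cmod q ^ n) ^ k)%R by ring.
  apply Rmult_le_compat_r; auto.
  replace (C0 * PA / mB / Cmod (1 - a * z) * Pt / mq * (1 / 4) ^ n)%R with
    ((C0 * (1/4)^n) * (PA / mB / Cmod (1 - a * z) * Pt / mq))%R by (field; lra).
  apply Rmult_le_compat; auto. apply Rmult_le_pos; auto.
Qed.

End Inf.


Lemma CSeries_correct (a : nat -> C) : ex_series a -> is_series a (CSeries a).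
Proof. intros [l Hl]. rewrite (CSeries_eq _ _ Hl). exact Hl. Qed.

Lemma quarter_lim (K : R) : forall eps, (0 < eps)%R -> eventually (fun n => (K * (1/4) ^ n < eps)%R).
Proof.
  intros eps He. destruct (Rle_or_lt K 0) as [h|h].
  - exists 0%nat. intros n _. assert (0 <= (1/4)^n)%R by (apply pow_le; lra). nra.
  - destruct (pow_lt_1_zero (1/4) ltac:(rewrite Rabs_pos_eq; lra) (eps / K) ltac:(apply Rdiv_lt_0_compat; lra)) as [N HN].
    exists N. intros n Hn. specialize (HN n Hn). rewrite Rabs_pos_eq in HN by (apply pow_le; lra).
    apply Rmult_lt_reg_r with (/ K)%R. apply Rinv_0_lt_compat; lra.
    replace (K * (1/4)^n * / K)%R with ((1/4)^n)%R by (field; lra). exact HN.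
Qed.

Section Inf2.
Variables a b z q w : C.
Hypothesis Hq : (Cmod q < 1)%R.
Hypothesis Hb : b <> 0.
Hypothesis Hw : w * w = a * z.
Hypothesis HA : forall k, a * z * q ^ k <> 1.
Hypothesis HBz : forall k, b * z * q ^ k <> 1.

Definition Lval := qpinf (a*z*q) q / qpinf (b*z) q.

Lemma Z_bound : exists K, (0 <= K)%R /\ forall n k, (Cmod (Zfn a b z q n k) <= K * (1/4)^n * (Cmod q ^ n) ^ k)%R.
Proof.
  destruct (Cfn_bound a b z q Hq HA HBz) as [K [HK HKb]].
  exists (K * (1 + Cmod (a*z)))%R. split. apply Rmult_le_pos; auto. assert (H := Cmod_ge_0 (a*z)); lra.
  intros n k. rewrite (Z_C a b z q) by assumption. rewrite Cmod_mult.
  assert (Hf : (Cmod (1 - a * z * (q ^ n * q ^ n * q ^ k)) <= 1 + Cmod (a*z))%R).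
  { eapply Rle_trans. apply Cmod_1m_le. rewrite (Cmod_mult (a*z) (q^n*q^n*q^k)), (Cmod_mult (q^n*q^n) (q^k)), (Cmod_mult (q^n) (q^n)), !Cmod_pow.
    assert (Hq0 := Cmod_ge_0 q). assert (HAz := Cmod_ge_0 (a*z)).
    assert (h1 : (Cmod q ^ n <= 1)%R) by (apply pow_le1; lra).
    assert (h2 : (Cmod q ^ k <= 1)%R) by (apply pow_le1; lra).
    assert (h3 : (0 <= Cmod q ^ n)%R) by (apply pow_le; lra).
    assert (h4 : (0 <= Cmod q ^ k)%R) by (apply pow_le; lra).
    assert (Cmod q ^ n * Cmod q ^ n * Cmod q ^ k <= 1)%R.
    { apply Rle_trans with (1 * 1 * 1)%R; [|lra]. apply Rmult_le_compat; try apply Rmult_le_compat; nra. }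
    assert (0 <= Cmod q ^ n * Cmod q ^ n * Cmod q ^ k)%R by (repeat apply Rmult_le_pos; auto).
    nra. }
  specialize (HKb n k).
  assert (H0 := Cmod_ge_0 (Cfn a b z q n k)).
  assert (H1 := Cmod_ge_0 (1 - a * z * (q ^ n * q ^ n * q ^ k))).
  replace (K * (1 + Cmod (a * z)) * (1 / 4) ^ n * (Cmod q ^ n) ^ k)%R
    with (K * (1 / 4) ^ n * (Cmod q ^ n) ^ k * (1 + Cmod (a * z)))%R by ring.
  apply Rmult_le_compat; auto.
Qed.

Lemma W_bound : exists K, (0 <= K)%R /\ forall n k, (Cmod (Wfn a b z q n k) <= K * (1/4)^n)%R.
Proof.
  destruct (Cfn_bound a b z q Hq HA HBz) as [K [HK HKb]].
  exists (K * 2)%R. split. lra.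
  intros n k. rewrite (W_C a b z q) by assumption. rewrite Cmod_opp, Cmod_mult.
  assert (Hf : (Cmod (1 - q ^ n) <= 2)%R).
  { eapply Rle_trans. apply Cmod_1m_le. rewrite Cmod_pow.
    assert (Cmod q ^ n <= 1)%R by (apply pow_le1; [apply Cmod_ge_0|lra]). lra. }
  specialize (HKb n k).
  assert (Hp : ((Cmod q ^ n) ^ k <= 1)%R).
  { apply pow_le1. apply pow_le, Cmod_ge_0. apply pow_le1; [apply Cmod_ge_0|lra]. }
  assert (Hp0 : (0 <= (1/4) ^ n)%R) by (apply pow_le; lra).
  assert (K * (1 / 4) ^ n * (Cmod q ^ n) ^ k <= K * (1/4)^n)%R.
  { replace (K * (1/4)^n)%R with (K * (1/4)^n * 1)%R at 2 by ring. apply Rmult_le_compat_l; nra. }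
  replace (K * 2 * (1 / 4) ^ n)%R with (K * (1/4)^n * 2)%R by ring.
  apply Rmult_le_compat; auto using Cmod_ge_0. lra.
Qed.

Lemma Z_bound2 : exists K, (0 <= K)%R /\ forall n k, (Cmod (Zfn a b z q n k) <= K * (1/4)^n)%R.
Proof.
  destruct Z_bound as [K [HK HKb]]. exists K. split; auto. intros n k.
  eapply Rle_trans. apply HKb.
  assert (Hp : ((Cmod q ^ n) ^ k <= 1)%R).
  { apply pow_le1. apply pow_le, Cmod_ge_0. apply pow_le1; [apply Cmod_ge_0|lra]. }
  assert (Hp0 : (0 <= (1/4) ^ n)%R) by (apply pow_le; lra).
  replace (K * (1/4)^n)%R with (K * (1/4)^n * 1)%R at 2 by ring. apply Rmult_le_compat_l; nra.
Qed.

Lemma Z_ex k : ex_series (fun n => Zfn a b z q n k).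
Proof.
  destruct Z_bound2 as [K [HK HKb]].
  exact (proj1 (series_le _ (fun n => K * (1/4)^n)%R _ (fun n => HKb n k) (geom_series K (1/4) ltac:(lra)))).
Qed.

End Inf2.


Ltac getl t H := pose proof t as H; repeat match type of H with ?P -> _ => lazymatch type of P with Prop => specialize (H ltac:(assumption)) end end.

Section Inf3.
Variables a b z q w : C.
Hypothesis Hq : (Cmod q < 1)%R.
Hypothesis Hb : b <> 0.
Hypothesis Hw : w * w = a * z.
Hypothesis HA : forall k, a * z * q ^ k <> 1.
Hypothesis HBz : forall k, b * z * q ^ k <> 1.

Lemma W0 k : Wfn a b z q 0 k = 0.
Proof. unfold Wfn. change (q ^ 0) with (RtoC 1). unfold Cdiv. ring. Qed.

Lemma Wlim k : filterlim (fun N => Wfn a b z q (S N) k) eventually (locally (RtoC 0)).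
Proof.
  getl (W_bound a b z q) HW. destruct HW as [K [HK HKb]].
  apply (Cloc_intro eventually). intros eps He.
  destruct (quarter_lim K eps He) as [N HN]. exists N. intros n Hn.
  replace (Wfn a b z q (S n) k - 0) with (Wfn a b z q (S n) k) by ring.
  eapply Rle_lt_trans. apply HKb.
  apply Rle_lt_trans with (K * (1/4)^n)%R; [|apply HN; lia].
  apply Rmult_le_compat_l; auto. simpl. assert (0 <= (1/4)^n)%R by (apply pow_le; lra). lra.
Qed.

Lemma G_shift k : CSeries (fun n => Zfn a b z q n k) = CSeries (fun n => Zfn a b z q n (S k)).
Proof.
  getl (Z_ex a b z q) HZ.
  assert (Ha := CSeries_correct _ (HZ k)).
  assert (Hb' := CSeries_correct _ (HZ (S k))).
  assert (Hm := is_series_minus _ _ _ _ Ha Hb').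
  assert (Hs : forall N, sum_n (fun n => plus (Zfn a b z q n k) (opp (Zfn a b z q n (S k)))) N = Wfn a b z q (S N) k).
  { induction N.
    - rewrite sum_O. change (Zfn a b z q 0 k - Zfn a b z q 0 (S k) = Wfn a b z q 1 k).
      rewrite (tele a b z q) by assumption. rewrite W0. ring.
    - rewrite sum_Sn, IHN. change (Wfn a b z q (S N) k + (Zfn a b z q (S N) k - Zfn a b z q (S N) (S k)) = Wfn a b z q (S (S N)) k).
      rewrite (tele a b z q) by assumption. ring. }
  assert (H0 : is_series (fun n => plus (Zfn a b z q n k) (opp (Zfn a b z q n (S k)))) (RtoC 0)).
  { unfold is_series. apply filterlim_ext with (f := fun N => Wfn a b z q (S N) k).
    intros N; rewrite Hs; auto. apply Wlim. }
  assert (E := filterlim_locally_unique (F := eventually) _ _ _ Hm H0).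
  change (CSeries (fun n : nat => Zfn a b z q n k) - CSeries (fun n : nat => Zfn a b z q n (S k)) = 0) in E.
  replace (CSeries (fun n : nat => Zfn a b z q n k)) with
    (CSeries (fun n : nat => Zfn a b z q n k) - CSeries (fun n : nat => Zfn a b z q n (S k)) + CSeries (fun n : nat => Zfn a b z q n (S k))) by ring.
  rewrite E. ring.
Qed.

End Inf3.


Lemma geom_lim (K r : R) : (0 <= r < 1)%R -> forall eps, (0 < eps)%R -> eventually (fun n => (K * r ^ n < eps)%R).
Proof.
  intros Hr eps He. destruct (Rle_or_lt K 0) as [h|h].
  - exists 0%nat. intros n _. assert (0 <= r^n)%R by (apply pow_le; lra). nra.
  - destruct (pow_lt_1_zero r ltac:(rewrite Rabs_pos_eq; lra) (eps / K) ltac:(apply Rdiv_lt_0_compat; lra)) as [N HN].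
    exists N. intros n Hn. specialize (HN n Hn). rewrite Rabs_pos_eq in HN by (apply pow_le; lra).
    apply Rmult_lt_reg_r with (/ K)%R. apply Rinv_0_lt_compat; lra.
    replace (K * r^n * / K)%R with (r^n)%R by (field; lra). exact HN.
Qed.

Section Inf4.
Variables a b z q w : C.
Hypothesis Hq : (Cmod q < 1)%R.
Hypothesis Hb : b <> 0.
Hypothesis Hw : w * w = a * z.
Hypothesis HA : forall k, a * z * q ^ k <> 1.
Hypothesis HBz : forall k, b * z * q ^ k <> 1.

Lemma Z0k k : Zfn a b z q 0 k = qpoch (a*z*q) q k / qpoch (b*z) q k.
Proof.
  rewrite (Z_C a b z q) by assumption. unfold Cfn. rewrite efn_0.
  change (q ^ 0) with (RtoC 1). rewrite Cpow_1_l. simpl (0 + k)%nat.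
  assert (H := qpoch_shift1 (a*z) q k).
  replace (qpoch (a * z * q) q k) with (qpoch (a * z) q k * (1 - a * z * q ^ k) / (1 - a * z)).
  2: { rewrite <- H. field. apply (nzAz a z q HA). }
  simpl. field; repeat split; try first [apply (nzAz a z q HA) | apply (nzQB b z q HBz)];
  try (intros E; injection E as E1 E2; lra).
Qed.

Lemma qpinfB_nz : qpinf (b*z) q <> 0.
Proof.
  destruct (qpoch_lb (b*z) q Hq HBz) as [m [Hm Hmb]].
  assert (H := closedC_ge eventually (qpoch (b*z) q) _ m (qpoch_conv (b*z) q Hq) (ex_intro _ 0%nat (fun n _ => Hmb n))).
  intros E. rewrite E, Cmod_0 in H. lra.
Qed.

Lemma G_lim : filterlim (fun k => CSeries (fun n => Zfn a b z q n k)) eventually (locally (Lval a b z q)).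
Proof.
  getl (Z_ex a b z q) HZ.
  getl (Z_bound a b z q) HB. destruct HB as [K [HK HKb]].
  assert (Hq0 := Cmod_ge_0 q).
  assert (HR : forall k, (Cmod (CSeries (fun n => Zfn a b z q n k) - Zfn a b z q 0 k) <= K * Cmod q ^ k / (1 - 1/4))%R).
  { intros k.
    assert (Ha := CSeries_correct _ (HZ k)).
    assert (Ha' : is_series (fun n => Zfn a b z q (S n) k) (CSeries (fun n => Zfn a b z q n k) - Zfn a b z q 0 k)).
    { apply (is_series_incr_1 (V := C_NormedModule) (fun n => Zfn a b z q n k)).
      match goal with |- is_series _ ?l => replace l with (CSeries (fun n => Zfn a b z q n k)) end.
      exact Ha.
      change (CSeries (fun n => Zfn a b z q n k) = (CSeries (fun n => Zfn a b z q n k) - Zfn a b z q 0 k) + Zfn a b z q 0 k). ring. }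
    rewrite <- (CSeries_eq _ _ Ha').
    assert (Hbd : forall n, (Cmod (Zfn a b z q (S n) k) <= (K * Cmod q ^ k) * (1/4)^n)%R).
    2: exact (proj2 (series_le_norm _ _ _ Hbd (geom_series (K * Cmod q ^ k) (1/4) ltac:(lra)))).
    intros n. eapply Rle_trans. apply HKb.
    assert (h1 : ((1/4)^(S n) <= (1/4)^n)%R) by (apply pow_decr; lra || lia).
    assert (h2 : ((Cmod q ^ S n) ^ k <= Cmod q ^ k)%R).
    { apply pow_incr. split. apply pow_le; auto. replace (Cmod q) with (Cmod q ^ 1)%R at 2 by ring. apply pow_decr; lra || lia. }
    assert (0 <= (1/4)^(S n))%R by (apply pow_le; lra).
    assert (0 <= (Cmod q ^ S n) ^ k)%R by (apply pow_le, pow_le; auto).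
    replace (K * Cmod q ^ k * (1/4)^n)%R with (K * (1/4)^n * Cmod q ^ k)%R by ring.
    apply Rmult_le_compat; auto. apply Rmult_le_pos; auto. apply Rmult_le_compat_l; auto. }
  assert (HQ : filterlim (fun k => Zfn a b z q 0 k) eventually (locally (Lval a b z q))).
  { apply filterlim_ext with (f := fun k => qpoch (a*z*q) q k * / qpoch (b*z) q k).
    intros k. rewrite Z0k. reflexivity.
    unfold Lval. apply (lim_mult eventually). apply qpoch_conv; auto.
    apply (lim_inv eventually). apply qpinfB_nz. apply qpoch_conv; auto. }
  apply (Cloc_intro eventually). intros eps He.
  assert (He2 : (0 < eps / 2)%R) by lra.
  apply (filter_imp (fun k => (Cmod (Zfn a b z q 0 k - Lval a b z q) < eps / 2)%R /\ (K / (1 - 1/4) * Cmod q ^ k < eps / 2)%R)).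
  - intros k [H1 H2]. specialize (HR k).
    replace (CSeries (fun n : nat => Zfn a b z q n k) - Lval a b z q) with
      ((CSeries (fun n : nat => Zfn a b z q n k) - Zfn a b z q 0 k) + (Zfn a b z q 0 k - Lval a b z q)) by ring.
    eapply Rle_lt_trans. apply Cmod_triangle.
    replace (K * Cmod q ^ k / (1 - 1/4))%R with (K / (1 - 1/4) * Cmod q ^ k)%R in HR by (field; lra). lra.
  - apply filter_and. apply (Cloc_elim eventually); auto.
    apply geom_lim; auto.
Qed.

Lemma G_val k : is_series (fun n => Zfn a b z q n k) (Lval a b z q).
Proof.
  getl (Z_ex a b z q) HZ.
  assert (Hc : forall k, CSeries (fun n => Zfn a b z q n k) = CSeries (fun n => Zfn a b z q n 0)).
  { induction k0; auto. rewrite <- IHk0. symmetry. apply (G_shift a b z q); assumption. }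
  assert (E : CSeries (fun n => Zfn a b z q n 0) = Lval a b z q).
  { apply (filterlim_locally_unique (F := eventually) (fun k => CSeries (fun n => Zfn a b z q n k))).
    - apply filterlim_ext with (f := fun _ => CSeries (fun n => Zfn a b z q n 0)).
      intros k0; rewrite (Hc k0); auto. apply (lim_const eventually).
    - apply G_lim. }
  rewrite <- E, <- (Hc k). apply CSeries_correct. apply HZ.
Qed.

End Inf4.


Lemma onem_lb (x q : C) : (Cmod q < 1)%R -> (forall j, x * q ^ j <> 1) ->
  exists m, (0 < m)%R /\ forall j, (m <= Cmod (1 - x * q ^ j))%R.
Proof.
  intros Hq H. destruct (qpoch_lb x q Hq H) as [m [Hm Hmb]].
  set (P := exp (Cmod x / (1 - Cmod q))).
  assert (HP : (0 < P)%R) by apply exp_pos.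
  exists (m / P)%R. split. apply Rdiv_lt_0_compat; auto.
  intros j. assert (E := Hmb (S j)). rewrite qpoch_S, Cmod_mult in E.
  assert (U := qpoch_ub x q j Hq). fold P in U.
  assert (H0 := Cmod_ge_0 (1 - x * q ^ j)).
  apply Rmult_le_reg_l with P; auto.
  replace (P * (m / P))%R with m by (field; lra).
  apply Rle_trans with (Cmod (qpoch x q j) * Cmod (1 - x * q ^ j))%R; auto.
  apply Rmult_le_compat_r; auto.
Qed.

Lemma Cmod_sum_n (u : nat -> C) K : (Cmod (sum_n u K) <= sum_n (fun k => Cmod (u k)) K)%R.
Proof.
  induction K.
  - rewrite !sum_O. lra.
  - rewrite !sum_Sn. change (Cmod (sum_n u K + u (S K)) <= sum_n (fun k => Cmod (u k)) K + Cmod (u (S K)))%R.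
    eapply Rle_trans. apply Cmod_triangle. lra.
Qed.

Section Main1.
Variable r : nat.
Variables a b c z q w : C.
Variables A B : nat -> C.
Hypothesis Hq : (Cmod q < 1)%R.
Hypothesis Hcz : (Cmod (c * z) < 1)%R.
Hypothesis Hb : b <> 0.
Hypothesis Hw : w * w = a * z.
Hypothesis HA : forall k, a * z * q ^ k <> 1.
Hypothesis HBz : forall k, b * z * q ^ k <> 1.
Hypothesis HBj : forall j k, (j < r)%nat -> B j * q ^ k <> 1.

Definition acoef k := qpochs (fam A (S r)) q k / (qpoch q q k * qpochs (fam B r) q k) * pow_n (c*z) k.

Lemma famB_ok : forall x, In x (fam B r) -> forall j, x * q ^ j <> 1.
Proof. intros x Hx j. destruct (in_fam B r x Hx) as [i [Hi ->]]. apply HBj; auto. Qed.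

Lemma acoef_bound : exists Ka, (0 <= Ka)%R /\ forall k, (Cmod (acoef k) <= Ka * Cmod (c*z) ^ k)%R.
Proof.
  destruct (qpochs_ub (fam A (S r)) q Hq) as [KA [HKA HKAb]].
  destruct (qpochs_lb (fam B r) q Hq famB_ok) as [mB [HmB HmBb]].
  destruct (qpoch_lb q q Hq (fun j => qq_nz q j Hq)) as [mq [Hmq Hmqb]].
  exists (KA / (mq * mB))%R. split. apply Rdiv_le_0_compat; auto. apply Rmult_lt_0_compat; auto.
  intros k. unfold acoef. rewrite pow_nC. rewrite Cmod_mult, Cmod_pow.
  apply Rmult_le_compat_r. apply pow_le, Cmod_ge_0.
  apply Cmod_div_le; auto. apply Rmult_lt_0_compat; auto.
  rewrite Cmod_mult. apply Rmult_le_compat; lra || auto.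
Qed.

Lemma Y_bound : exists KY, (0 <= KY)%R /\ forall n k, (Cmod (Yfn a b z q n k) <= KY)%R.
Proof.
  destruct (onem_lb (a*z) q Hq HA) as [m1 [Hm1 Hm1b]].
  destruct (qpoch_lb (b*z) q Hq HBz) as [mB [HmB HmBb]].
  set (PA := exp (Cmod (a*z) / (1 - Cmod q))).
  set (PB := exp (Cmod (b*z) / (1 - Cmod q))).
  assert (HPA : (0 < PA)%R) by apply exp_pos.
  assert (HPB : (0 < PB)%R) by apply exp_pos.
  assert (Hq0 := Cmod_ge_0 q). assert (HAz := Cmod_ge_0 (a*z)).
  exists (PA * (1 + Cmod (a*z)) / (m1 * (mB / PB)))%R. split.
  { apply Rdiv_le_0_compat. apply Rmult_le_pos; lra. apply Rmult_lt_0_compat; auto. apply Rdiv_lt_0_compat; auto. }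
  intros n k. unfold Yfn.
  rewrite Cmod_mult, Cmod_pow, Cmod_pow.
  assert (Hu : ((Cmod q ^ n) ^ k <= 1)%R).
  { apply pow_le1. apply pow_le; auto. apply pow_le1; lra. }
  assert (Hu0 : (0 <= (Cmod q ^ n) ^ k)%R) by (apply pow_le, pow_le; auto).
  rewrite <- (Rmult_1_r (PA * (1 + Cmod (a * z)) / (m1 * (mB / PB)))).
  apply Rmult_le_compat; auto using Cmod_ge_0.
  apply Cmod_div_le.
  - apply Cmod_mult_le.
    + eapply Rle_trans. apply qpoch_ub; auto. unfold PA. apply exp_le_mono.
      unfold Rdiv. apply Rmult_le_compat_r. left; apply Rinv_0_lt_compat; lra.
      rewrite Cmod_mult, Cmod_pow. assert (Cmod q ^ n <= 1)%R by (apply pow_le1; lra).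
      assert (0 <= Cmod q ^ n)%R by (apply pow_le; lra). nra.
    + eapply Rle_trans. apply Cmod_1m_le.
      rewrite (Cmod_mult (a*z)), !Cmod_mult, !Cmod_pow.
      assert (h1 : (Cmod q ^ n <= 1)%R) by (apply pow_le1; lra).
      assert (h2 : (Cmod q ^ k <= 1)%R) by (apply pow_le1; lra).
      assert (h3 : (0 <= Cmod q ^ n)%R) by (apply pow_le; lra).
      assert (h4 : (0 <= Cmod q ^ k)%R) by (apply pow_le; lra).
      assert (Cmod q ^ n * Cmod q ^ n * Cmod q ^ k <= 1)%R.
      { apply Rle_trans with (1 * 1 * 1)%R; [|lra]. apply Rmult_le_compat; try apply Rmult_le_compat; nra. }
      assert (0 <= Cmod q ^ n * Cmod q ^ n * Cmod q ^ k)%R by (repeat apply Rmult_le_pos; auto).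
      assert (0 <= Cmod a * Cmod z)%R by (apply Rmult_le_pos; apply Cmod_ge_0). nra.
  - apply Rmult_lt_0_compat; auto. apply Rdiv_lt_0_compat; auto.
  - rewrite Cmod_mult. apply Rmult_le_compat; [lra| apply Rdiv_le_0_compat; lra | |].
    + rewrite <- Cpow_add_r. apply Hm1b.
    + assert (E := HmBb (n + k)%nat). rewrite qpoch_add, Cmod_mult in E.
      assert (U := qpoch_ub (b*z) q n Hq). fold PB in U.
      assert (H0 := Cmod_ge_0 (qpoch (b * z * q ^ n) q k)).
      apply Rmult_le_reg_l with PB; auto.
      replace (PB * (mB / PB))%R with mB by (field; lra).
      eapply Rle_trans; [exact E|]. apply Rmult_le_compat_r; auto.
Qed.

Lemma O_bound : exists KO, (0 <= KO)%R /\ forall n, (Cmod (Ofn a b z q w n) <= KO * Cmod (b*z) ^ n)%R.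
Proof.
  destruct (qpoch_lb (b*z) q Hq HBz) as [mB [HmB HmBb]].
  destruct (qpoch_lb q q Hq (fun j => qq_nz q j Hq)) as [mq [Hmq Hmqb]].
  set (PA := exp (Cmod (a*z) / (1 - Cmod q))).
  set (Pt := exp (Cmod (a*q/b) / (1 - Cmod q))).
  assert (HPA : (0 < PA)%R) by apply exp_pos.
  assert (HPt : (0 < Pt)%R) by apply exp_pos.
  assert (Hq0 := Cmod_ge_0 q). assert (HAz := Cmod_ge_0 (a*z)).
  assert (H1A := proj1 (Cmod_gt_0 _) (nzAz a z q HA)).
  exists (PA * (1 + Cmod (a*z)) * Pt / (Cmod (1 - a*z) * mq * mB))%R. split.
  { apply Rdiv_le_0_compat. repeat apply Rmult_le_pos; lra. repeat apply Rmult_lt_0_compat; auto. }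
  intros n. rewrite (Ofn_closed a b z q w) by assumption.
  rewrite Cmod_mult, Cmod_pow. apply Rmult_le_compat_r. apply pow_le, Cmod_ge_0.
  apply Cmod_div_le.
  - apply Cmod_mult_le; [apply Cmod_mult_le|apply qpoch_ub; auto].
    + apply qpoch_ub; auto.
    + eapply Rle_trans. apply Cmod_1m_le.
      rewrite (Cmod_mult (a*z)), !Cmod_mult, !Cmod_pow.
      assert (h1 : (Cmod q ^ n <= 1)%R) by (apply pow_le1; lra).
      assert (h3 : (0 <= Cmod q ^ n)%R) by (apply pow_le; lra).
      assert (Cmod q ^ n * Cmod q ^ n <= 1)%R by nra.
      assert (0 <= Cmod q ^ n * Cmod q ^ n)%R by nra.
      assert (0 <= Cmod a * Cmod z)%R by (apply Rmult_le_pos; apply Cmod_ge_0). nra.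
  - repeat apply Rmult_lt_0_compat; auto.
  - rewrite !Cmod_mult. apply Rmult_le_compat.
    + apply Rmult_le_pos; lra.
    + lra.
    + apply Rmult_le_compat; [lra|lra|lra|apply Hmqb].
    + apply HmBb.
Qed.

End Main1.


Lemma sum_n_le_R (u v : nat -> R) K : (forall k, (u k <= v k)%R) -> (sum_n u K <= sum_n v K)%R.
Proof.
  intros H. induction K.
  - rewrite !sum_O. auto.
  - rewrite !sum_Sn. change (sum_n u K + u (S K) <= sum_n v K + v (S K))%R. specialize (H (S K)). lra.
Qed.

Lemma sum_n_scal_R (c : R) (u : nat -> R) K : sum_n (fun k => c * u k)%R K = (c * sum_n u K)%R.
Proof. exact (sum_n_mult_l (K := R_Ring) c u K). Qed.

Section Main2.
Variable r : nat.
Variables a b c z q w : C.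
Variables A B : nat -> C.
Hypothesis Hq : (Cmod q < 1)%R.
Hypothesis Hcz : (Cmod (c * z) < 1)%R.
Hypothesis Hb : b <> 0.
Hypothesis Hw : w * w = a * z.
Hypothesis HA : forall k, a * z * q ^ k <> 1.
Hypothesis HBz : forall k, b * z * q ^ k <> 1.
Hypothesis HBj : forall j k, (j < r)%nat -> B j * q ^ k <> 1.

Definition Phi n := phi (a * z * pow_n q n :: a * z * pow_n q (2 * n + 1) :: fam A (S r))
          (b * z * pow_n q n :: a * z * pow_n q (2 * n) :: fam B r)
          q (c * z * pow_n q n).

Lemma Phi_eq n : Phi n = CSeries (fun k => acoef r c z q A B k * Yfn a b z q n k).
Proof.
  unfold Phi, phi. f_equal. apply functional_extensionality; intros k.
  rewrite !qpochs_cons. unfold acoef, Yfn. rewrite (pow_nC q n), (pow_nC q (2*n+1)), (pow_nC q (2*n)), (pow_nC (c*z*q^n) k), (pow_nC (c*z) k).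
  assert (E1 : q ^ (2 * n + 1) = q ^ n * q ^ n * q).
  { replace (2 * n + 1)%nat with (n + n + 1)%nat by lia. rewrite !Cpow_add_r, Cpow_1_r. ring. }
  assert (E2 : q ^ (2 * n) = q ^ n * q ^ n).
  { replace (2 * n)%nat with (n + n)%nat by lia. apply Cpow_add_r. }
  rewrite E1, E2.
  replace (a * z * (q ^ n * q ^ n * q)) with (a * z * (q ^ n * q ^ n) * q) by ring.
  assert (Hs := qpoch_shift1 (a * z * (q ^ n * q ^ n)) q k).
  assert (HX : 1 - a * z * (q ^ n * q ^ n) <> 0) by (apply (nzAz2 a z q HA)).
  assert (HXk : qpoch (a * z * (q ^ n * q ^ n)) q k <> 0).
  { apply qpoch_nz. intros j _. rewrite <- Cpow_add_r, <- Cmult_assoc, <- Cpow_add_r. apply HA. }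
  replace (qpoch (a * z * (q ^ n * q ^ n) * q) q k) with
    (qpoch (a * z * (q ^ n * q ^ n)) q k * (1 - a * z * (q ^ n * q ^ n) * q ^ k) / (1 - a * z * (q ^ n * q ^ n))).
  2: { rewrite <- Hs. field. auto. }
  rewrite Cpow_mult_l.
  assert (HBl : qpochs (fam B r) q k <> 0).
  { destruct (qpochs_lb (fam B r) q Hq (famB_ok r q B HBj)) as [m [Hm Hmb]].
    intros E. specialize (Hmb k). rewrite E, Cmod_0 in Hmb. lra. }
  field. repeat split; auto.
  - apply (nzQBn b z q HBz).
  - apply (nzQq q Hq).
Qed.


Lemma Phi_bound : exists KP, (0 <= KP)%R /\ forall n,
  ex_series (fun k => acoef r c z q A B k * Yfn a b z q n k) /\
  (Cmod (CSeries (fun k => (acoef r c z q A B k * Yfn a b z q n k)%C)) <= KP)%R.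
Proof.
  getl (acoef_bound r c z q A B) HAc. destruct HAc as [Ka [HKa HKab]].
  getl (Y_bound a b z q) HY. destruct HY as [KY [HKY HKYb]].
  assert (Hcz0 := Cmod_ge_0 (c*z)).
  exists (Ka * KY / (1 - Cmod (c*z)))%R. split.
  { apply Rdiv_le_0_compat; [apply Rmult_le_pos; auto|lra]. }
  intros n.
  assert (Hbd : forall k, (Cmod ((acoef r c z q A B k * Yfn a b z q n k)%C) <= (Ka * KY) * Cmod (c*z) ^ k)%R).
  { intros k. rewrite Cmod_mult.
    replace (Ka * KY * Cmod (c * z) ^ k)%R with (Ka * Cmod (c * z) ^ k * KY)%R by ring.
    apply Rmult_le_compat; auto using Cmod_ge_0. }
  exact (series_le_norm _ _ _ Hbd (geom_series (Ka * KY) (Cmod (c*z)) ltac:(lra))).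
Qed.

Definition Tinf n := efn a z q n * Ofn a b z q w n * Phi n.

Lemma Tinf_series : is_series Tinf (Lval a b z q * CSeries (acoef r c z q A B)).
Proof.
  getl (acoef_bound r c z q A B) HAc. destruct HAc as [Ka [HKa HKab]].
  getl (Z_bound2 a b z q) HZ. destruct HZ as [KZ [HKZ HKZb]].
  getl Phi_bound HP. destruct HP as [KP [HKP HKPb]].
  assert (Hcz0 := Cmod_ge_0 (c*z)).
  set (Sa := (Ka / (1 - Cmod (c*z)))%R).
  assert (Hgeo := geom_series Ka (Cmod (c*z)) ltac:(lra)).
  assert (Hac : ex_series (acoef r c z q A B)) by exact (proj1 (series_le _ _ _ HKab Hgeo)).
  set (f := fun K n => sum_n (fun k => acoef r c z q A B k * Zfn a b z q n k) K).
  assert (Hf_eq : forall K n, f K n = efn a z q n * Ofn a b z q w n * sum_n (fun k => acoef r c z q A B k * Yfn a b z q n k) K).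
  { intros K n. unfold f. rewrite <- (sum_n_mult_l (K := C_Ring)). apply sum_n_ext. intros k.
    rewrite <- (VZ a b z q w) by assumption. change (acoef r c z q A B k * (efn a z q n * Ofn a b z q w n * Yfn a b z q n k) =
      (efn a z q n * Ofn a b z q w n) * (acoef r c z q A B k * Yfn a b z q n k)). ring. }
  assert (Hf_lim : forall n, filterlim (fun K => f K n) eventually (locally (Tinf n))).
  { intros n. apply filterlim_ext with (f := fun K => efn a z q n * Ofn a b z q w n * sum_n (fun k => acoef r c z q A B k * Yfn a b z q n k) K).
    intros K; rewrite Hf_eq; auto.
    unfold Tinf. apply (lim_mult eventually). apply (lim_const eventually).
    rewrite Phi_eq. apply (CSeries_correct _ (proj1 (HKPb n))). }
  assert (Hf_bd : forall K n, (Cmod (f K n) <= (Sa * KZ) * (1/4)^n)%R).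
  { intros K n. unfold f. eapply Rle_trans. apply Cmod_sum_n.
    apply Rle_trans with (sum_n (fun k => (KZ * (1/4)^n) * (Ka * Cmod (c*z) ^ k))%R K).
    { apply sum_n_le_R. intros k. rewrite Cmod_mult.
      rewrite Rmult_comm. apply Rmult_le_compat; auto using Cmod_ge_0. }
    rewrite sum_n_scal_R.
    replace (Sa * KZ * (1/4)^n)%R with ((KZ * (1/4)^n) * Sa)%R by ring.
    apply Rmult_le_compat_l. apply Rmult_le_pos; auto. apply pow_le; lra.
    apply sum_n_le_lim; auto. intros k. apply Rmult_le_pos; auto. apply pow_le; auto. }
  destruct (tannery eventually f Tinf (fun n => (Sa * KZ) * (1/4)^n)%R _
     (geom_series (Sa * KZ) (1/4) ltac:(lra)) (filter_forall _ (fun K => Hf_bd K)) Hf_lim) as [_ [HexT HlimT]].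
  assert (Hfs : forall K, is_series (f K) (Lval a b z q * sum_n (acoef r c z q A B) K)).
  { induction K.
    - assert (H := is_series_scal_l (V := C_NormedModule) (acoef r c z q A B 0) _ _ (G_val a b z q Hq Hb HA HBz 0)).
      eapply is_series_ext; [|match goal with H : is_series _ ?l |- is_series _ ?l' => replace l' with l; [exact H|] end].
      + intros n. unfold f. rewrite sum_O. reflexivity.
      + rewrite sum_O. change (acoef r c z q A B 0 * Lval a b z q = Lval a b z q * acoef r c z q A B 0). ring.
    - assert (H := is_series_scal_l (V := C_NormedModule) (acoef r c z q A B (S K)) _ _ (G_val a b z q Hq Hb HA HBz (S K))).
      assert (H2 := is_series_plus _ _ _ _ IHK H).
      eapply is_series_ext; [|match goal with H : is_series _ ?l |- is_series _ ?l' => replace l' with l; [exact H2|] end].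
      + intros n. unfold f. rewrite sum_Sn. reflexivity.
      + rewrite sum_Sn. change (Lval a b z q * sum_n (acoef r c z q A B) K + acoef r c z q A B (S K) * Lval a b z q =
          Lval a b z q * (sum_n (acoef r c z q A B) K + acoef r c z q A B (S K))). ring. }
  assert (Hlim2 : filterlim (fun K => CSeries (f K)) eventually (locally (Lval a b z q * CSeries (acoef r c z q A B)))).
  { apply filterlim_ext with (f := fun K => Lval a b z q * sum_n (acoef r c z q A B) K).
    intros K. rewrite (CSeries_eq _ _ (Hfs K)). auto.
    apply (lim_mult eventually). apply (lim_const eventually). apply (CSeries_correct _ Hac). }
  assert (E := filterlim_locally_unique (F := eventually) _ _ _ HlimT Hlim2).
  rewrite <- E. apply CSeries_correct. auto.
Qed.

End Main2.


Lemma coef_eq (a b z q w x y : C) n : x <> 0 -> y <> 0 ->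
  qpoch (a * z * q / x) q n <> 0 -> qpoch (a * z * q / y) q n <> 0 ->
  qpoch q q n <> 0 -> qpoch w q n <> 0 -> qpoch (- w) q n <> 0 -> qpoch (b * z) q n <> 0 ->
  qpochs (a * z :: w * q :: - w * q :: a * q / b :: x :: y :: nil) q n
    / qpochs (q :: w :: - w :: b * z :: a * z * q / x :: a * z * q / y :: nil) q n
    * pow_n (b * z / (x * y)) n
  = ratio (a * z) q (/ x) (/ y) n * Ofn a b z q w n.
Proof.
  intros Hx Hy H1 H2 H3 H4 H5 H6.
  rewrite !qpochs_cons, !qpochs_nil.
  rewrite (qpoch_inv x q n Hx), (qpoch_inv y q n Hy).
  rewrite (pow_nC (b * z / (x * y)) n).
  assert (Ep : (b * z / (x * y)) ^ n = (b * z) ^ n * / (x ^ n * y ^ n)).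
  { unfold Cdiv. rewrite (Cpow_mult_l (b * z) (/ (x * y))), Cpow_inv by (apply Cmult_neq0; auto). rewrite (Cpow_mult_l x y). reflexivity. }
  rewrite Ep.
  unfold ratio, Ofn.
  assert (Hxn := Cpow_nz x n Hx). assert (Hyn := Cpow_nz y n Hy).
  change (a * z * q / x) with (a * z * q * / x) in *.
  change (a * z * q / y) with (a * z * q * / y) in *.
  set (xn := x ^ n) in *. set (yn := y ^ n) in *. set (bzn := (b * z) ^ n).
  field. repeat split; auto.
Qed.

Lemma ratio_lim (A q : C) n :
  filterlim (fun p : C * C => ratio A q (/ fst p) (/ snd p) n) infty2 (locally (ratio A q 0 0 n)).
Proof.
  unfold ratio. unfold Cdiv.
  apply (lim_mult infty2).
  - apply (lim_mult infty2); apply (gq_lim infty2); [apply inv_lim_fst|apply inv_lim_snd].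
  - apply (lim_inv infty2).
    + rewrite !Cmult_0_r, !qpoch_zero. intros E. injection E as E1 E2. lra.
    + apply (lim_mult infty2); apply (qpoch_lim infty2); apply (lim_mult infty2 (fun _ => A * q)); try apply (lim_const infty2).
      apply inv_lim_fst. apply inv_lim_snd.
Qed.

Theorem corollary3p1 (r : nat) (a b c z q w : C) (A B : nat -> C) :
  Cmod q < 1 -> Cmod (c * z) < 1 ->
  (* w = (az)^{1/2}, either branch *)
  w * w = a * z ->
  (* genericity: all denominators nonzero *)
  b <> 0 ->
  (forall k : nat, a * z * pow_n q k <> 1) ->
  (forall k : nat, b * z * pow_n q k <> 1) ->
  (forall (j k : nat), (j < r)%nat -> B j * pow_n q k <> 1) ->
  let LHS := qpinf (a * z * q) q / qpinf (b * z) q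
             * phi (fam A (S r)) (fam B r) q (c * z) in
  let term (p : C * C) (n : nat) : C :=
    let x := fst p in let y := snd p in
    qpochs (a * z :: w * q :: - w * q :: a * q / b :: x :: y :: nil) q n
    / qpochs (q :: w :: - w :: b * z :: a * z * q / x :: a * z * q / y :: nil) q n
    * pow_n (b * z / (x * y)) n
    * phi (a * z * pow_n q n :: a * z * pow_n q (2 * n + 1) :: fam A (S r))
          (b * z * pow_n q n :: a * z * pow_n q (2 * n) :: fam B r)
          q (c * z * pow_n q n) in
  infty2 (fun p => ex_series (term p)) /\
  filterlim (fun p => CSeries (term p)) infty2 (locally LHS).
Proof.
  intros Hq Hcz Hw Hb HA0 HB0 HBj0 LHS term.
  assert (HA : forall k, a * z * q ^ k <> 1) by (intros k; rewrite <- pow_nC; auto).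
  assert (HBz : forall k, b * z * q ^ k <> 1) by (intros k; rewrite <- pow_nC; auto).
  assert (HBj : forall j k, (j < r)%nat -> B j * q ^ k <> 1) by (intros j k h; rewrite <- pow_nC; auto).
  assert (ELHS : LHS = Lval a b z q * CSeries (acoef r c z q A B)) by reflexivity.
  rewrite ELHS. rewrite <- (CSeries_eq _ _ (Tinf_series r a b c z q w A B Hq Hcz Hb Hw HA HBz HBj)).
  destruct (ratio_bound (a*z) q (b*z) Hq) as [d [C0 [Hd [HC0 Hrb]]]].
  getl (O_bound a b z q w) HO. destruct HO as [KO [HKO HKOb]].
  getl (Phi_bound r a b c z q A B) HP. destruct HP as [KP [HKP HKPb]].
  assert (HAz := Cmod_ge_0 (a*z)). assert (Hq0 := Cmod_ge_0 q).
  set (d2 := Rmin d ((1 - Cmod q) / (2 * (Cmod (a*z) + 1)))).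
  assert (Hd2 : (0 < d2)%R). { apply Rmin_glb_lt; auto. apply Rdiv_lt_0_compat; lra. }
  assert (Hd2a : (d2 <= d)%R) by apply Rmin_l.
  assert (Hd2b : (d2 <= (1 - Cmod q) / (2 * (Cmod (a*z) + 1)))%R) by apply Rmin_r.
  assert (Hsmall : forall x : C, (/ d2 < Cmod x)%R -> x <> 0 /\ (Cmod (/ x) <= d2)%R).
  { intros x Hx. assert (0 < / d2)%R by (apply Rinv_0_lt_compat; auto).
    assert (Hx0 : x <> 0). { intros E. rewrite E, Cmod_0 in Hx. lra. }
    split; auto. rewrite Cmod_inv by auto. left.
    replace d2 with (/ / d2)%R by (field; lra). apply Rinv_lt_contravar; nra. }
  assert (Hgood : infty2 (fun p => forall n, term p n = ratio (a*z) q (/ fst p) (/ snd p) n * Ofn a b z q w n * Phi r a b c z q A B n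
                              /\ (Cmod (ratio (a*z) q (/ fst p) (/ snd p) n) * Cmod (b*z) ^ n <= C0 * (1/4)^n)%R)).
  { exists (/ d2)%R. intros x y Hx Hy n. simpl fst; simpl snd.
    destruct (Hsmall x Hx) as [Hx0 Hx1]. destruct (Hsmall y Hy) as [Hy0 Hy1].
    split.
    - unfold term. simpl fst; simpl snd. unfold Phi.
      rewrite (coef_eq a b z q w x y n Hx0 Hy0).
      + reflexivity.
      + intros E. assert (Hh := qpoch_half (a*z) q (/ x) n Hq ltac:(lra)). change (a * z * q / x) with (a * z * q * / x) in E.
        rewrite E, Cmod_0 in Hh. lra.
      + intros E. assert (Hh := qpoch_half (a*z) q (/ y) n Hq ltac:(lra)). change (a * z * q / y) with (a * z * q * / y) in E.
        rewrite E, Cmod_0 in Hh. lra.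
      + apply (nzQq q Hq).
      + apply (nzQw a z q w Hw HA).
      + apply (nzQmw a z q w Hw HA).
      + apply (nzQB b z q HBz).
    - apply Hrb; lra. }
  assert (Hbd : infty2 (fun p => forall n, (Cmod (term p n) <= (C0 * KO * KP) * (1/4)^n)%R)).
  { eapply filter_imp; [|exact Hgood]. intros p Hp n. destruct (Hp n) as [E Hr]. rewrite E.
    rewrite !Cmod_mult.
    assert (H1 := HKOb n). assert (H2 := proj2 (HKPb n)). fold (Phi r a b c z q A B n) in H2.
    rewrite <- Phi_eq in H2 by assumption.
    assert (G0 := Cmod_ge_0 (ratio (a * z) q (/ fst p) (/ snd p) n)).
    assert (G1 := Cmod_ge_0 (Ofn a b z q w n)).
    assert (G2 := Cmod_ge_0 (Phi r a b c z q A B n)).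
    assert (G3 : (0 <= Cmod (b*z) ^ n)%R) by (apply pow_le, Cmod_ge_0).
    apply Rle_trans with (Cmod (ratio (a * z) q (/ fst p) (/ snd p) n) * (KO * Cmod (b*z) ^ n) * KP)%R.
    { apply Rmult_le_compat; auto. apply Rmult_le_pos; auto. apply Rmult_le_compat_l; auto. }
    replace (Cmod (ratio (a * z) q (/ fst p) (/ snd p) n) * (KO * Cmod (b * z) ^ n) * KP)%R
      with ((Cmod (ratio (a * z) q (/ fst p) (/ snd p) n) * Cmod (b * z) ^ n) * (KO * KP))%R by ring.
    replace (C0 * KO * KP * (1 / 4) ^ n)%R with ((C0 * (1/4)^n) * (KO * KP))%R by ring.
    apply Rmult_le_compat_r; auto. apply Rmult_le_pos; auto. }
  assert (Hlim : forall n, filterlim (fun p => term p n) infty2 (locally (Tinf r a b c z q w A B n))).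
  { intros n. apply (filterlim_ext_loc (fun p => ratio (a*z) q (/ fst p) (/ snd p) n * Ofn a b z q w n * Phi r a b c z q A B n)).
    - eapply filter_imp; [|exact Hgood]. intros p Hp. symmetry. apply (proj1 (Hp n)).
    - unfold Tinf, efn. apply (lim_mult infty2); [|apply (lim_const infty2)].
      apply (lim_mult infty2); [|apply (lim_const infty2)].
      apply ratio_lim. }
  destruct (tannery infty2 term (Tinf r a b c z q w A B) (fun n => (C0 * KO * KP) * (1/4)^n)%R _
     (geom_series (C0 * KO * KP) (1/4) ltac:(lra)) Hbd Hlim) as [H1 [_ H3]].
  split; auto.
Qed.
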